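(* There is $t_0>0$ such that for $-t_0<t<0$ one has $$|g(\Phi_t(w),z)|\approx|g(w,z)|+|t|\qquad\text{for all } w,z\in bD,$$ with implicit constants independent of $t$, $w$, $z$. In particular $|g(\Phi_t(w),z)|\gtrsim|g(w,z)|$ for $w,z\in bD$ and such $t$.
   Context: Let $n\ge2$ and $D\subset\mathbb C^n$ be a bounded strongly pseudoconvex domain of class $C^2$ with a $C^2$ strictly plurisubharmonic defining function $\rho$ ($D=\{\rho<0\}$, $\nabla\rho\ne0$ on $bD$), and $D_t=\{\rho+t<0\}$. $\Phi_t$ is the time-$t$ flow (defined near $bD$ for small $|t|$) of the $C^1$ vector field $-\nabla\rho/|\nabla\rho|^2$, so that $\rho(\Phi_t(x))=\rho(x)-t$ and $\Phi_t$ is a $C^1$ bijection of $bD$ onto $bD_t$ (for $t<0$, $\Phi_t(w)$ lies outside $\bar D$ at distance comparable to $|t|$); its first order expansion is $\Phi_t(w)=w+t\,\mathbb N_w+o(|t|)$ uniformly in $w\in bD$, where $\mathbb N_w=-\nabla\rho(w)/|\nabla\rho(w)|^2$. $g(w,z)$ is the (fixed parameter) denominator function of the Lanzani–Stein Cauchy kernel: holomorphic in $z$, $C^1$ in $w$ on a neighborhood of $\bar D$, and for $w$ near $z$ of the form $g(w,z)=\langle\partial\rho(w),w-z\rangle+Q_w(w-z)$, where $Q_w$ is a quadratic form in $w-z$ with coefficients continuous in $w$ (a smooth approximation of the holomorphic Hessian term of the Levi polynomial); it satisfies $\mathrm{Re}\,g(w,z)\ge c(-\rho(z)+|w-z|^2)$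 for $z\in\bar D$, $w\in bD$. Known fact (Lanzani–Stein): with $\nu_z$ the inner unit normal at $z\in bD$, $|g(w,z+\delta\nu_z)|\approx|g(w,z)|+\delta$ for $w,z\in bD$ and all sufficiently small $\delta>0$. *)

(* Defs.v *)
(* C^n is modelled as R^(2n): a point is  x : nat -> R  whose coordinates
   of index >= 2n vanish; the complex coordinate j (j < n) is
   z_j = x (2j) + i x (2j+1). *)
From Stdlib Require Import Reals Lra.
Open Scope R_scope.

Definition pt := nat -> R.

Fixpoint sumR (k : nat) (f : nat -> R) : R :=
  match k with O => 0 | S k' => sumR k' f + f k' end.

Definition is_pt (m : nat) (x : pt) : Prop := forall i, (m <= i)%nat -> x i = 0.
Definition vadd (x y : pt) : pt := fun i => x i + y i.
Definition vsub (x y : pt) : pt := fun i => x i - y i.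
Definition vscal (a : R) (x : pt) : pt := fun i => a * x i.
Definition dot (m : nat) (x y : pt) : R := sumR m (fun i => x i * y i).
Definition vnorm (m : nat) (x : pt) : R := sqrt (dot m x x).

(* multiplication by i (complex structure J) on R^m, m = 2n *)
Definition cstr (m : nat) (v : pt) : pt :=
  fun i => if Nat.ltb i m then (if Nat.even i then - v (S i) else v (pred i)) else 0.

Definition Cpx := (R * R)%type.
Definition Cadd (a b : Cpx) : Cpx := (fst a + fst b, snd a + snd b).
Definition Cmul (a b : Cpx) : Cpx :=
  (fst a * fst b - snd a * snd b, fst a * snd b + snd a * fst b).
Definition Cabs (a : Cpx) : R := sqrt (fst a * fst a + snd a * snd a).
Fixpoint Csum (k : nat) (f : nat -> Cpx) : Cpx :=
  match k with O => (0, 0) | S k' => Cadd (Csum k' f) (f k') end.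

Definition zc (x : pt) (j : nat) : Cpx := (x (2 * j)%nat, x (2 * j + 1)%nat).

Definition open_in (m : nat) (U : pt -> Prop) : Prop :=
  (forall x, U x -> is_pt m x) /\
  (forall x, U x -> exists r, 0 < r /\
     forall y, is_pt m y -> vnorm m (vsub y x) < r -> U y).

Definition closure (m : nat) (S : pt -> Prop) (x : pt) : Prop :=
  is_pt m x /\ forall eps, 0 < eps -> exists y, S y /\ vnorm m (vsub y x) < eps.

Definition has_grad (m : nat) (f : pt -> R) (x gr : pt) : Prop :=
  is_pt m gr /\
  forall eps, 0 < eps -> exists del, 0 < del /\
    forall y, is_pt m y -> vnorm m (vsub y x) < del ->
      Rabs (f y - f x - dot m gr (vsub y x)) <= eps * vnorm m (vsub y x).

Definition cont_on (m : nat) (S : pt -> Prop) (f : pt -> R) : Prop :=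
  forall x, S x -> forall eps, 0 < eps -> exists del, 0 < del /\
    forall y, S y -> vnorm m (vsub y x) < del -> Rabs (f y - f x) < eps.

Definition cont2_on (m : nat) (S : pt -> Prop) (f : pt -> pt -> R) : Prop :=
  forall w z, S w -> S z -> forall eps, 0 < eps -> exists del, 0 < del /\
    forall w' z', S w' -> S z' -> vnorm m (vsub w' w) < del ->
      vnorm m (vsub z' z) < del -> Rabs (f w' z' - f w z) < eps.

Definition C2_on (m : nat) (U : pt -> Prop) (rho : pt -> R)
    (grad : pt -> pt) (hess : pt -> nat -> pt) : Prop :=
  (forall x, U x -> has_grad m rho x (grad x)) /\
  (forall x i, U x -> (i < m)%nat -> has_grad m (fun y => grad y i) x (hess x i)) /\
  (forall i j, (i < m)%nat -> (j < m)%nat -> cont_on m U (fun y => hess y i j)).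

(* Levi form (complex Hessian) in real terms, times 4:
   sum_{j,k} rho_{j kbar} v_j conj(v_k) = 1/4 (D^2 rho(v,v) + D^2 rho(Jv,Jv)) *)
Definition levi (m : nat) (hess : pt -> nat -> pt) (x v : pt) : R :=
  sumR m (fun i => sumR m (fun j =>
     hess x i j * (v i * v j + cstr m v i * cstr m v j))).

Definition strictly_psh_on (m : nat) (U : pt -> Prop) (hess : pt -> nat -> pt) : Prop :=
  forall x, U x -> forall v, is_pt m v -> 0 < vnorm m v -> 0 < levi m hess x v.

Definition Dom (U : pt -> Prop) (rho : pt -> R) (x : pt) : Prop := U x /\ rho x < 0.
Definition Dbar (n : nat) (U : pt -> Prop) (rho : pt -> R) : pt -> Prop :=
  closure (2 * n) (Dom U rho).
Definition bD (n : nat) (U : pt -> Prop) (rho : pt -> R) (x : pt) : Prop :=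
  Dbar n U rho x /\ ~ Dom U rho x.

Definition path_connected (m : nat) (S : pt -> Prop) : Prop :=
  forall x y, S x -> S y -> exists p : R -> pt,
    p 0 = x /\ p 1 = y /\ (forall s, 0 <= s <= 1 -> S (p s)) /\
    (forall s, 0 <= s <= 1 -> forall eps, 0 < eps -> exists del, 0 < del /\
       forall s', 0 <= s' <= 1 -> Rabs (s' - s) < del ->
         vnorm m (vsub (p s') (p s)) < eps).

(* D = {rho < 0} (rho defined on the open set U containing the closure of D)
   is a bounded strongly pseudoconvex domain of class C^2 with C^2 strictly
   psh defining function rho, grad rho <> 0 on bD *)
Definition SPC_setup (n : nat) (U : pt -> Prop) (rho : pt -> R)
    (grad : pt -> pt) (hess : pt -> nat -> pt) : Prop :=
  let m := (2 * n)%nat in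
  open_in m U /\ C2_on m U rho grad hess /\ strictly_psh_on m U hess /\
  (exists x, Dom U rho x) /\ path_connected m (Dom U rho) /\
  (exists M, forall x, Dom U rho x -> vnorm m x <= M) /\
  (forall x, Dbar n U rho x -> U x) /\
  (forall x, bD n U rho x -> 0 < vnorm m (grad x)).

Definition Nfield (m : nat) (grad : pt -> pt) (x : pt) : pt :=
  vscal (- / dot m (grad x) (grad x)) (grad x).

Definition is_flow (n : nat) (U : pt -> Prop) (rho : pt -> R)
    (grad : pt -> pt) (Phi : R -> pt -> pt) : Prop :=
  let m := (2 * n)%nat in
  exists T (W : pt -> Prop), 0 < T /\ open_in m W /\
    (forall x, bD n U rho x -> W x) /\ (forall x, W x -> U x) /\
    forall x, W x -> Phi 0 x = x /\
      forall t, -T < t < T ->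
        U (Phi t x) /\ 0 < vnorm m (grad (Phi t x)) /\
        forall i, derivable_pt_lim (fun s => Phi s x i) t (Nfield m grad (Phi t x) i).

(* first-order expansion Phi_t(w) = w + t N_w + o(|t|) uniformly on bD (stated fact) *)
Definition flow_expansion (n : nat) (U : pt -> Prop) (rho : pt -> R)
    (grad : pt -> pt) (Phi : R -> pt -> pt) : Prop :=
  let m := (2 * n)%nat in
  forall eps, 0 < eps -> exists del, 0 < del /\
    forall t w, Rabs t < del -> bD n U rho w ->
      vnorm m (vsub (Phi t w) (vadd w (vscal t (Nfield m grad w)))) <= eps * Rabs t.

(* <d rho(w), w - z> = sum_j (d rho / d w_j)(w) (w_j - z_j),
   d rho/d w_j = 1/2 (d rho/d x_j - i d rho/d y_j) *)
Definition drho_j (grad : pt -> pt) (w : pt) (j : nat) : Cpx :=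
  (/ 2 * grad w (2 * j)%nat, - (/ 2 * grad w (2 * j + 1)%nat)).
Definition pair_drho (n : nat) (grad : pt -> pt) (w z : pt) : Cpx :=
  Csum n (fun j => Cmul (drho_j grad w j) (zc (vsub w z) j)).
Definition Qform (n : nat) (a : pt -> nat -> nat -> Cpx) (w zeta : pt) : Cpx :=
  Csum n (fun j => Csum n (fun k => Cmul (a w j k) (Cmul (zc zeta j) (zc zeta k)))).

Definition nu (m : nat) (grad : pt -> pt) (z : pt) : pt :=
  vscal (- / vnorm m (grad z)) (grad z).

Definition LS_denominator (n : nat) (U : pt -> Prop) (rho : pt -> R)
    (grad : pt -> pt) (G : pt -> Prop) (g : pt -> pt -> Cpx) : Prop :=
  let m := (2 * n)%nat in
  open_in m G /\ (forall x, Dbar n U rho x -> G x) /\ (forall x, G x -> U x) /\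
  cont2_on m G (fun w z => fst (g w z)) /\ cont2_on m G (fun w z => snd (g w z)) /\
  (* holomorphic in z: real differentiable + Cauchy-Riemann *)
  (forall w z, G w -> G z -> exists gu gv,
      has_grad m (fun y => fst (g w y)) z gu /\
      has_grad m (fun y => snd (g w y)) z gv /\
      (forall i, gv i = cstr m gu i)) /\
  (exists Gu Gv : pt -> pt -> pt,
      (forall w z, G w -> G z ->
         has_grad m (fun y => fst (g y z)) w (Gu w z) /\
         has_grad m (fun y => snd (g y z)) w (Gv w z)) /\
      (forall i, (i < m)%nat ->
         cont2_on m G (fun w z => Gu w z i) /\ cont2_on m G (fun w z => Gv w z i))) /\
  (exists r (a : pt -> nat -> nat -> Cpx), 0 < r /\
      (forall j k, (j < n)%nat -> (k < n)%nat ->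
         cont_on m G (fun w => fst (a w j k)) /\ cont_on m G (fun w => snd (a w j k))) /\
      (forall w z, G w -> G z -> vnorm m (vsub w z) < r ->
         g w z = Cadd (pair_drho n grad w z) (Qform n a w (vsub w z)))) /\
  (exists c, 0 < c /\ forall w z, Dbar n U rho z -> bD n U rho w ->
      fst (g w z) >= c * (- rho z + vnorm m (vsub w z) ^ 2)) /\
  (* known fact (Lanzani--Stein): |g(w, z + delta nu_z)| ~ |g(w,z)| + delta *)
  (exists d0 A B, 0 < d0 /\ 0 < A /\ 0 < B /\
      forall w z delta, bD n U rho w -> bD n U rho z -> 0 < delta < d0 ->
        A * (Cabs (g w z) + delta) <= Cabs (g w (vadd z (vscal delta (nu m grad z)))) /\
        Cabs (g w (vadd z (vscal delta (nu m grad z)))) <= B * (Cabs (g w z) + delta)).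

(* Main.v *)
Require Import Defs.
From Stdlib Require Import Reals Lra Lia Psatz ZArith Classical ClassicalEpsilon FunctionalExtensionality.
Open Scope R_scope.

Lemma Rabs_le_inv x a : Rabs x <= a -> -a <= x <= a.
Proof. intros H. pose proof (Rle_abs x). pose proof (Rle_abs (-x)). rewrite Rabs_Ropp in *. lra. Qed.

Lemma sumR_ext k f h : (forall i, (i < k)%nat -> f i = h i) -> sumR k f = sumR k h.
Proof. induction k; simpl; intros H; [reflexivity|]. rewrite IHk by (intros; apply H; lia). rewrite H by lia. reflexivity. Qed.

Lemma sumR_le k f h : (forall i, (i < k)%nat -> f i <= h i) -> sumR k f <= sumR k h.
Proof. induction k; simpl; intros H; [lra|]. assert (sumR k f <= sumR k h) by (apply IHk; intros; apply H; lia). assert (f k <= h k) by (apply H; lia). lra. Qed.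

Lemma sumR_nonneg k f : (forall i, (i < k)%nat -> 0 <= f i) -> 0 <= sumR k f.
Proof. intros H. replace 0 with (sumR k (fun _ => 0)). apply sumR_le; auto. induction k; simpl; auto. rewrite IHk; try lra. intros; apply H; lia. Qed.

Lemma sumR_plus k f h : sumR k (fun i => f i + h i) = sumR k f + sumR k h.
Proof. induction k; simpl; lra. Qed.

Lemma sumR_minus k f h : sumR k (fun i => f i - h i) = sumR k f - sumR k h.
Proof. induction k; simpl; lra. Qed.

Lemma sumR_scal k a f : sumR k (fun i => a * f i) = a * sumR k f.
Proof. induction k; simpl; lra. Qed.

Lemma sumR_abs k f : Rabs (sumR k f) <= sumR k (fun i => Rabs (f i)).
Proof. induction k; simpl. rewrite Rabs_R0; lra. eapply Rle_trans. apply Rabs_triang. lra. Qed.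

Lemma sumR_const k c : sumR k (fun _ => c) = INR k * c.
Proof. induction k; simpl sumR. simpl; lra. rewrite S_INR; lra. Qed.

Lemma sumR_le_const k f c : (forall i, (i < k)%nat -> f i <= c) -> sumR k f <= INR k * c.
Proof. intros H. rewrite <- sumR_const. apply sumR_le; auto. Qed.

Lemma sumR_term k f i : (forall j, (j < k)%nat -> 0 <= f j) -> (i < k)%nat -> f i <= sumR k f.
Proof. induction k; intros H Hi; [lia|]. simpl. destruct (Nat.eq_dec i k).
 subst. assert (0 <= sumR k f) by (apply sumR_nonneg; intros; apply H; lia). lra.
 assert (f i <= sumR k f) by (apply IHk; [intros; apply H; lia| lia]). assert (0 <= f k) by (apply H; lia). lra. Qed.

Lemma sumR_split2 n f : sumR (2 * n)%nat f = sumR n (fun j => f (2 * j)%nat + f (2 * j + 1)%nat).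
Proof. induction n. reflexivity. replace (2 * S n)%nat with (S (S (2 * n))) by lia.
 change (sumR (S (S (2 * n))) f) with (sumR (2*n) f + f (2*n)%nat + f (S (2*n))).
 change (sumR (S n) (fun j => f (2 * j)%nat + f (2 * j + 1)%nat)) with (sumR n (fun j => f (2 * j)%nat + f (2 * j + 1)%nat) + (f (2 * n)%nat + f (2 * n + 1)%nat)).
 rewrite IHn. replace (S (2*n)) with (2*n+1)%nat by lia. lra. Qed.

Lemma dot_sym m x y : dot m x y = dot m y x.
Proof. unfold dot. apply sumR_ext. intros; ring. Qed.

Lemma dot_self_nonneg m x : 0 <= dot m x x.
Proof. unfold dot. apply sumR_nonneg. intros; nra. Qed.

Lemma vnorm_nonneg m x : 0 <= vnorm m x.
Proof. apply sqrt_pos. Qed.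

Lemma vnorm_sq m x : vnorm m x * vnorm m x = dot m x x.
Proof. apply sqrt_sqrt, dot_self_nonneg. Qed.

Lemma coord_le_vnorm m v i : (i < m)%nat -> Rabs (v i) <= vnorm m v.
Proof. intros Hi. unfold vnorm. rewrite <- sqrt_Rsqr_abs. apply sqrt_le_1_alt. unfold Rsqr, dot.
 apply (sumR_term m (fun i => v i * v i)); auto. intros; nra. Qed.

Lemma CS_sq m x y : dot m x y * dot m x y <= dot m x x * dot m y y.
Proof. unfold dot. induction m; simpl. lra.
 set (A := sumR m (fun i => x i * x i)) in *. set (B := sumR m (fun i => y i * y i)) in *.
 set (C := sumR m (fun i => x i * y i)) in *.
 assert (0 <= A) by (apply sumR_nonneg; intros; nra). assert (0 <= B) by (apply sumR_nonneg; intros; nra).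
 set (a := x m) . set (b := y m).
 assert (a*a*B + b*b*A - 2*a*b*C >= 0).
 { destruct (Req_dec A 0) as [HA|HA].
   - rewrite HA in *. assert (HC0 : C*C <= 0) by nra. assert (HC : C = 0) by nra. rewrite HC. nra.
   - assert (A * (a*a*B + b*b*A - 2*a*b*C) = (b*A - a*C)*(b*A - a*C) + a*a*(A*B - C*C)) by ring.
     assert (0 < A) by lra.
     assert (HX : 0 <= A * (a*a*B + b*b*A - 2*a*b*C)).
     { rewrite H1. assert (0 <= (b*A - a*C)*(b*A - a*C)) by apply Rle_0_sqr. assert (0 <= a*a*(A*B-C*C)) by (apply Rmult_le_pos; [apply Rle_0_sqr| lra]). lra. }
     destruct (Rle_or_lt 0 (a*a*B + b*b*A - 2*a*b*C)); [lra|].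
     assert (A * (a*a*B + b*b*A - 2*a*b*C) < 0) by (apply Rmult_pos_neg; lra). lra. }
 nra. Qed.

Lemma CS m x y : Rabs (dot m x y) <= vnorm m x * vnorm m y.
Proof. unfold vnorm. rewrite <- sqrt_mult by apply dot_self_nonneg. rewrite <- sqrt_Rsqr_abs. apply sqrt_le_1_alt.
 unfold Rsqr. apply CS_sq. Qed.

Lemma dot_add_l m x y z : dot m (vadd x y) z = dot m x z + dot m y z.
Proof. unfold dot, vadd. rewrite <- sumR_plus. apply sumR_ext; intros; ring. Qed.
Lemma dot_add_r m x y z : dot m z (vadd x y) = dot m z x + dot m z y.
Proof. rewrite dot_sym, dot_add_l, (dot_sym m x), (dot_sym m y); ring. Qed.

Lemma vnorm_triang m x y : vnorm m (vadd x y) <= vnorm m x + vnorm m y.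
Proof. assert (H1 := vnorm_nonneg m x). assert (H2 := vnorm_nonneg m y). assert (H3 := vnorm_nonneg m (vadd x y)).
 apply Rsqr_incr_0_var; unfold Rsqr; try lra. rewrite vnorm_sq, dot_add_l, !dot_add_r.
 assert (H := CS m x y). rewrite (dot_sym m y x). rewrite <- !vnorm_sq. apply Rabs_le_inv in H. nra. Qed.

Lemma vnorm_scal m a x : vnorm m (vscal a x) = Rabs a * vnorm m x.
Proof. unfold vnorm, dot, vscal. rewrite <- (sqrt_Rsqr (Rabs a)) by apply Rabs_pos. rewrite <- sqrt_mult.
 f_equal. rewrite <- Rsqr_abs. unfold Rsqr. rewrite <- sumR_scal. apply sumR_ext; intros; ring.
 apply Rle_0_sqr. apply sumR_nonneg; intros; nra. Qed.

Lemma vnorm_ext m x y : (forall i, (i < m)%nat -> x i = y i) -> vnorm m x = vnorm m y.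
Proof. intros H. unfold vnorm, dot. f_equal. apply sumR_ext. intros; rewrite H; auto. Qed.

Lemma vnorm_sub_sym m x y : vnorm m (vsub x y) = vnorm m (vsub y x).
Proof. replace (vsub x y) with (vscal (-1) (vsub y x)). rewrite vnorm_scal, Rabs_left by lra; ring.
 apply functional_extensionality; intros; unfold vscal, vsub; ring. Qed.

Lemma vnorm_sub_triang m x y z : vnorm m (vsub x z) <= vnorm m (vsub x y) + vnorm m (vsub y z).
Proof. replace (vsub x z) with (vadd (vsub x y) (vsub y z)). apply vnorm_triang.
 apply functional_extensionality; intros; unfold vadd, vsub; ring. Qed.

Lemma vnorm_le_sumabs m v : vnorm m v <= sumR m (fun i => Rabs (v i)).
Proof. assert (H0 : 0 <= sumR m (fun i => Rabs (v i))) by (apply sumR_nonneg; intros; apply Rabs_pos).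
 unfold vnorm. rewrite <- (sqrt_Rsqr _ H0). apply sqrt_le_1_alt. unfold Rsqr, dot.
 induction m; simpl. lra.
 assert (0 <= sumR m (fun i => Rabs (v i))) by (apply sumR_nonneg; intros; apply Rabs_pos).
 assert (HH := IHm H). assert (Rabs (v m) * Rabs (v m) = v m * v m) by (rewrite <- Rabs_mult; apply Rabs_right; nra).
 assert (0 <= Rabs (v m)) by apply Rabs_pos. nra. Qed.

Lemma dot_abs_bound m x y : Rabs (dot m x y) <= sumR m (fun i => Rabs (x i)) * vnorm m y.
Proof. unfold dot. eapply Rle_trans. apply sumR_abs. rewrite Rmult_comm, <- sumR_scal. apply sumR_le. intros.
 rewrite Rabs_mult. assert (H1 := coord_le_vnorm m y i H). assert (0 <= Rabs (x i)) by apply Rabs_pos. nra. Qed.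

Lemma vnorm_zero_vec m : vnorm m (fun _ => 0) = 0.
Proof. unfold vnorm, dot. replace (sumR m (fun i => 0 * 0)) with 0. apply sqrt_0. induction m; simpl; lra. Qed.

Lemma vsub_self x : vsub x x = fun _ => 0.
Proof. apply functional_extensionality; intros; unfold vsub; ring. Qed.
Definition Csub (a b : Cpx) : Cpx := (fst a - fst b, snd a - snd b).

Lemma Cabs_nonneg a : 0 <= Cabs a.
Proof. apply sqrt_pos. Qed.
Lemma Cabs_sq a : Cabs a * Cabs a = fst a * fst a + snd a * snd a.
Proof. apply sqrt_sqrt. nra. Qed.
Lemma Cabs_fst a : Rabs (fst a) <= Cabs a.
Proof. unfold Cabs. rewrite <- sqrt_Rsqr_abs. apply sqrt_le_1_alt. unfold Rsqr. nra. Qed.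
Lemma Cabs_snd a : Rabs (snd a) <= Cabs a.
Proof. unfold Cabs. rewrite <- sqrt_Rsqr_abs. apply sqrt_le_1_alt. unfold Rsqr. nra. Qed.
Lemma Cabs_le_sum a : Cabs a <= Rabs (fst a) + Rabs (snd a).
Proof. assert (H0 : 0 <= Rabs (fst a) + Rabs (snd a)) by (pose proof (Rabs_pos (fst a)); pose proof (Rabs_pos (snd a)); lra).
 unfold Cabs. rewrite <- (sqrt_Rsqr _ H0). apply sqrt_le_1_alt. unfold Rsqr.
 assert (Rabs (fst a) * Rabs (fst a) = fst a * fst a) by (rewrite <- Rabs_mult; apply Rabs_right; nra).
 assert (Rabs (snd a) * Rabs (snd a) = snd a * snd a) by (rewrite <- Rabs_mult; apply Rabs_right; nra).
 pose proof (Rabs_pos (fst a)); pose proof (Rabs_pos (snd a)). nra. Qed.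

Lemma Cabs_triang a b : Cabs (Cadd a b) <= Cabs a + Cabs b.
Proof. pose proof (Cabs_nonneg a). pose proof (Cabs_nonneg b). pose proof (Cabs_nonneg (Cadd a b)).
 pose proof (Cabs_sq a). pose proof (Cabs_sq b). pose proof (Cabs_sq (Cadd a b)).
 destruct a as [a1 a2]; destruct b as [b1 b2]. unfold Cadd in *; simpl in *.
 set (A := Cabs (a1,a2)) in *. set (B := Cabs (b1,b2)) in *. set (S := Cabs (a1+b1,a2+b2)) in *.
 assert (HAB : (a1*b1+a2*b2) <= A*B).
 { assert ((A*B)*(A*B) = (a1*a1+a2*a2)*(b1*b1+b2*b2)) by (rewrite <- H2, <- H3; ring).
   assert ((a1*b1+a2*b2)*(a1*b1+a2*b2) <= (A*B)*(A*B)) by (rewrite H5; pose proof (Rle_0_sqr (a1*b2-a2*b1)); unfold Rsqr in *; nra).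
   assert (0 <= A*B) by (apply Rmult_le_pos; lra). nra. }
 assert (S*S <= (A+B)*(A+B)) by nra. nra. Qed.

Lemma Cabs_sub_triang a b : Cabs (Csub a b) <= Cabs a + Cabs b.
Proof. replace (Csub a b) with (Cadd a (- fst b, - snd b)) by (unfold Csub, Cadd; simpl; f_equal; try ring).
 eapply Rle_trans. apply Cabs_triang. assert (Cabs (- fst b, - snd b) = Cabs b) by (unfold Cabs; simpl; f_equal; ring). lra. Qed.

Lemma Cabs_mul a b : Cabs (Cmul a b) = Cabs a * Cabs b.
Proof. unfold Cabs, Cmul. simpl. rewrite <- sqrt_mult by nra. f_equal. ring. Qed.

Lemma Csum_fst k f : fst (Csum k f) = sumR k (fun j => fst (f j)).
Proof. induction k; simpl; auto. rewrite IHk; auto. Qed.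
Lemma Csum_snd k f : snd (Csum k f) = sumR k (fun j => snd (f j)).
Proof. induction k; simpl; auto. rewrite IHk; auto. Qed.

Lemma Cabs_Csum k f : Cabs (Csum k f) <= sumR k (fun j => Cabs (f j)).
Proof. induction k; simpl. unfold Cabs; simpl. replace (0*0+0*0) with 0 by ring. rewrite sqrt_0; lra.
 eapply Rle_trans. apply Cabs_triang. lra. Qed.

Lemma Csum_sub k f h : Csub (Csum k f) (Csum k h) = Csum k (fun j => Csub (f j) (h j)).
Proof. induction k; simpl. unfold Csub; simpl; f_equal; ring. rewrite <- IHk. unfold Csub, Cadd; simpl; f_equal; ring. Qed.

Lemma Cabs_Csum_sub k f h : Cabs (Csub (Csum k f) (Csum k h)) <= sumR k (fun j => Cabs (Csub (f j) (h j))).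
Proof. rewrite Csum_sub. apply Cabs_Csum. Qed.

Lemma Cabs_zc n v j : (j < n)%nat -> Cabs (zc v j) <= 2 * vnorm (2 * n) v.
Proof. intros Hj. eapply Rle_trans. apply Cabs_le_sum. unfold zc. cbn [fst snd].
 pose proof (coord_le_vnorm (2*n)%nat v (2*j)%nat ltac:(lia)). pose proof (coord_le_vnorm (2*n)%nat v (2*j+1)%nat ltac:(lia)). lra. Qed.

Lemma is_pt_vsub m x y : is_pt m x -> is_pt m y -> is_pt m (vsub x y).
Proof. unfold is_pt, vsub; intros Hx Hy i Hi. rewrite Hx, Hy by auto; ring. Qed.
Lemma is_pt_vadd m x y : is_pt m x -> is_pt m y -> is_pt m (vadd x y).
Proof. unfold is_pt, vadd; intros Hx Hy i Hi. rewrite Hx, Hy by auto; ring. Qed.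
Lemma is_pt_vscal m a x : is_pt m x -> is_pt m (vscal a x).
Proof. unfold is_pt, vscal; intros Hx i Hi. rewrite Hx by auto; ring. Qed.

Lemma vnorm_diff m x y : vnorm m x <= vnorm m y + vnorm m (vsub x y).
Proof. replace x with (vadd y (vsub x y)) at 1. apply vnorm_triang.
 apply functional_extensionality; intros; unfold vadd, vsub; ring. Qed.

Lemma has_grad_lip m f x gr : has_grad m f x gr -> exists del C, 0 < del /\ 0 <= C /\
  forall y, is_pt m y -> vnorm m (vsub y x) < del -> Rabs (f y - f x) <= C * vnorm m (vsub y x).
Proof. intros [Hp H]. destruct (H 1 ltac:(lra)) as [del [Hd Hy]]. exists del, (vnorm m gr + 1). split; auto.
 split. pose proof (vnorm_nonneg m gr); lra. intros y Hpy Hdy. specialize (Hy y Hpy Hdy).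
 pose proof (CS m gr (vsub y x)).
 replace (f y - f x) with ((f y - f x - dot m gr (vsub y x)) + dot m gr (vsub y x)) by ring.
 eapply Rle_trans. apply Rabs_triang. lra. Qed.

Lemma has_grad_cont m f x gr : has_grad m f x gr -> forall eps, 0 < eps -> exists del, 0 < del /\
  forall y, is_pt m y -> vnorm m (vsub y x) < del -> Rabs (f y - f x) < eps.
Proof. intros Hg eps He. destruct (has_grad_lip m f x gr Hg) as [d [C [Hd [HC H]]]].
 exists (Rmin d (eps / (C+1))). split. apply Rmin_pos; auto. apply Rdiv_lt_0_compat; lra.
 intros y Hy Hdy. assert (vnorm m (vsub y x) < d) by (eapply Rlt_le_trans; [apply Hdy| apply Rmin_l]).
 assert (vnorm m (vsub y x) < eps/(C+1)) by (eapply Rlt_le_trans; [apply Hdy| apply Rmin_r]).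
 specialize (H y Hy H0). pose proof (vnorm_nonneg m (vsub y x)).
 assert (C * vnorm m (vsub y x) <= C * (eps/(C+1))) by (apply Rmult_le_compat_l; lra).
 assert (C * (eps/(C+1)) < eps). { apply (Rmult_lt_reg_r (C+1)). lra. field_simplify; nra. }
 lra. Qed.
Definition sincr (phi : nat -> nat) := forall k, (phi k < phi (S k))%nat.

Lemma sincr_ge phi : sincr phi -> forall k, (k <= phi k)%nat.
Proof. intros H k; induction k. lia. specialize (H k). lia. Qed.
Lemma sincr_mono phi : sincr phi -> forall a b, (a <= b)%nat -> (phi a <= phi b)%nat.
Proof. intros H a b Hab. induction Hab. lia. specialize (H m). lia. Qed.
Lemma sincr_comp phi psi : sincr phi -> sincr psi -> sincr (fun k => phi (psi k)).
Proof. intros H1 H2 k. specialize (H2 k). assert (S (psi k) <= psi (S k))%nat by lia.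
 pose proof (sincr_mono phi H1 _ _ H). specialize (H1 (psi k)). lia. Qed.

Lemma inv_small eps : 0 < eps -> exists N, forall k, (N <= k)%nat -> / (INR k + 1) < eps.
Proof. intros He. destruct (archimed (/ eps)) as [H1 _].
 assert (0 <= IZR (up (/eps))) by (pose proof (Rinv_0_lt_compat eps He); lra).
 exists (Z.to_nat (up (/ eps))). intros k Hk. apply le_INR in Hk. rewrite INR_IZR_INZ in Hk.
 rewrite Z2Nat.id in Hk. 2:{ apply le_IZR. lra. }
 assert (/ eps < INR k + 1) by lra. pose proof (pos_INR k).
 apply (Rmult_lt_reg_l (INR k + 1)). lra. rewrite Rinv_r by lra.
 apply (Rmult_lt_reg_l (/eps)). apply Rinv_0_lt_compat; lra.
 replace (/ eps * ((INR k + 1) * eps)) with (INR k + 1) by (field; lra). lra. Qed.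

Lemma BW1 (u : nat -> R) M : (forall k, Rabs (u k) <= M) ->
  exists phi l, sincr phi /\ forall eps, 0 < eps -> exists N, forall k, (N <= k)%nat -> Rabs (u (phi k) - l) < eps.
Proof. intros HM.
 destruct (Bolzano_Weierstrass u (fun c => -M <= c <= M) (compact_P3 (-M) M)) as [l Hl].
 { intros k. apply Rabs_le_inv. auto. }
 assert (Hsel : forall N k : nat, { p : nat | (N <= p)%nat /\ Rabs (u p - l) < / (INR k + 1) }).
 { intros N k. apply constructive_indefinite_description.
   assert (Hpos : 0 < / (INR k + 1)) by (apply Rinv_0_lt_compat; pose proof (pos_INR k); lra).
   destruct (Hl (fun y => Rabs (y - l) < / (INR k + 1)) N) as [p [Hp Hv]].
   { exists (mkposreal _ Hpos). intros y Hy. unfold disc in Hy. simpl in Hy. auto. }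
   exists p; auto. }
 set (phi := fix phi (k : nat) : nat := match k with O => proj1_sig (Hsel O O) | S k' => proj1_sig (Hsel (S (phi k')) (S k')) end).
 assert (Hphi : forall k, Rabs (u (phi k) - l) < / (INR k + 1)).
 { intros [|k]; simpl. exact (proj2 (proj2_sig (Hsel O O))). exact (proj2 (proj2_sig (Hsel _ _))). }
 exists phi, l. split.
 - intros k. change (phi (S k)) with (proj1_sig (Hsel (S (phi k)) (S k))). destruct (proj2_sig (Hsel (S (phi k)) (S k))). lia.
 - intros eps He. destruct (inv_small eps He) as [N HN]. exists N. intros k Hk.
   specialize (HN k Hk). specialize (Hphi k). lra.
Qed.

Lemma BWm (u : nat -> pt) M : (forall k i, Rabs (u k i) <= M) -> forall m,
  exists phi L, sincr phi /\ forall eps, 0 < eps -> exists N, forall k, (N <= k)%nat ->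
     sumR m (fun i => Rabs (u (phi k) i - L i)) < eps.
Proof. intros HM m. induction m.
 - exists (fun k => k), (fun _ => 0). split. intros k; lia. intros eps He; exists O; intros; simpl; lra.
 - destruct IHm as [phi [L [Hphi HL]]].
   destruct (BW1 (fun k => u (phi k) m) M) as [psi [l [Hpsi Hl]]]. { intros; apply HM. }
   exists (fun k => phi (psi k)), (fun i => if Nat.eqb i m then l else L i). split.
   apply sincr_comp; auto.
   intros eps He. destruct (HL (eps/2) ltac:(lra)) as [N1 H1]. destruct (Hl (eps/2) ltac:(lra)) as [N2 H2].
   exists (Nat.max N1 N2). intros k Hk. simpl sumR. rewrite Nat.eqb_refl.
   rewrite (sumR_ext m _ (fun i => Rabs (u (phi (psi k)) i - L i))).
   2:{ intros i Hi. destruct (Nat.eqb_spec i m). lia. reflexivity. }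
   assert (Hk1 : (N1 <= psi k)%nat) by (pose proof (sincr_ge psi Hpsi k); lia).
   specialize (H1 _ Hk1). specialize (H2 k ltac:(lia)). lra.
Qed.
Definition seqcomp m (K : pt -> Prop) := forall u : nat -> pt, (forall k, K (u k)) ->
  exists phi x, sincr phi /\ K x /\ forall eps, 0 < eps -> exists N, forall k, (N <= k)%nat ->
     vnorm m (vsub (u (phi k)) x) < eps.

Lemma Rabs_lt_inv x a : Rabs x < a -> -a < x < a.
Proof. intros H. pose proof (Rle_abs x). pose proof (Rle_abs (-x)). rewrite Rabs_Ropp in *. lra. Qed.

Lemma nat_large C : exists N, forall k, (N <= k)%nat -> C <= INR k.
Proof. destruct (archimed C) as [H1 _]. destruct (Rle_or_lt C 0).
 exists O. intros k _. pose proof (pos_INR k). lra.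
 exists (Z.to_nat (up C)). intros k Hk. apply le_INR in Hk. rewrite INR_IZR_INZ in Hk.
 rewrite Z2Nat.id in Hk. lra. apply le_IZR. lra. Qed.

Lemma inv_mono j k : (k <= j)%nat -> / (INR j + 1) <= / (INR k + 1).
Proof. intros H. apply le_INR in H. pose proof (pos_INR k). apply Rinv_le_contravar; lra. Qed.

Lemma compact_unif m K (P : R -> pt -> pt -> pt -> Prop) :
  seqcomp m K ->
  (forall w0 z0, K w0 -> K z0 -> exists del C, 0 < del /\ forall w z y, K w -> K z -> is_pt m y ->
      vnorm m (vsub w w0) < del -> vnorm m (vsub z z0) < del -> vnorm m (vsub y w0) < del -> P C w z y) ->
  (forall C C' w z y, C <= C' -> P C w z y -> P C' w z y) ->
  exists lam C, 0 < lam /\ forall w z y, K w -> K z -> is_pt m y -> vnorm m (vsub y w) < lam -> P C w z y.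
Proof. intros HK Hloc Hmon. apply NNPP. intros Hno.
 assert (Hk : forall k : nat, exists t : pt * pt * pt, K (fst (fst t)) /\ K (snd (fst t)) /\ is_pt m (snd t) /\
      vnorm m (vsub (snd t) (fst (fst t))) < / (INR k + 1) /\ ~ P (INR k) (fst (fst t)) (snd (fst t)) (snd t)).
 { intros k. apply NNPP. intros Hk. apply Hno. exists (/ (INR k + 1)), (INR k). split.
   apply Rinv_0_lt_compat; pose proof (pos_INR k); lra.
   intros w z y Hw Hz Hy Hd. apply NNPP. intros HP. apply Hk. exists (w, z, y). simpl; tauto. }
 set (sq := fun k => proj1_sig (constructive_indefinite_description _ (Hk k))).
 assert (Hsq : forall k, K (fst (fst (sq k))) /\ K (snd (fst (sq k))) /\ is_pt m (snd (sq k)) /\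
      vnorm m (vsub (snd (sq k)) (fst (fst (sq k)))) < / (INR k + 1) /\ ~ P (INR k) (fst (fst (sq k))) (snd (fst (sq k))) (snd (sq k))).
 { intros k. exact (proj2_sig (constructive_indefinite_description _ (Hk k))). }
 destruct (HK (fun k => fst (fst (sq k)))) as [phi [w0 [Hphi [Hw0 Hcw]]]]. { intros k; apply Hsq. }
 destruct (HK (fun k => snd (fst (sq (phi k))))) as [psi [z0 [Hpsi [Hz0 Hcz]]]]. { intros k; apply Hsq. }
 destruct (Hloc w0 z0 Hw0 Hz0) as [del [C [Hdel HP]]].
 destruct (Hcw (del/2) ltac:(lra)) as [N1 H1]. destruct (Hcz del Hdel) as [N2 H2].
 destruct (inv_small (del/2) ltac:(lra)) as [N3 H3]. destruct (nat_large C) as [N4 H4].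
 set (k := Nat.max (Nat.max N1 N2) (Nat.max N3 N4)).
 set (j := phi (psi k)).
 assert (Hkj : (k <= j)%nat) by (pose proof (sincr_ge psi Hpsi k); pose proof (sincr_ge phi Hphi (psi k)); unfold j; lia).
 destruct (Hsq j) as [Kw [Kz [Py [Dy NP]]]]. apply NP.
 apply (Hmon C). { specialize (H4 j ltac:(lia)). auto. }
 assert (Hw : vnorm m (vsub (fst (fst (sq j))) w0) < del / 2).
 { apply H1. pose proof (sincr_ge psi Hpsi k). lia. }
 assert (Hz : vnorm m (vsub (snd (fst (sq j))) z0) < del). { apply H2. lia. }
 apply HP; auto. lra.
 pose proof (vnorm_sub_triang m (snd (sq j)) (fst (fst (sq j))) w0).
 pose proof (inv_mono j k Hkj). specialize (H3 k ltac:(lia)). lra.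
Qed.

Lemma spc_unpack n U rho grad hess : SPC_setup n U rho grad hess ->
  open_in (2*n) U /\ C2_on (2*n) U rho grad hess /\ (exists M, forall x, Dom U rho x -> vnorm (2*n) x <= M) /\
  (forall x, Dbar n U rho x -> U x) /\ (forall x, bD n U rho x -> 0 < vnorm (2*n) (grad x)).
Proof. unfold SPC_setup. intros [H1 [H2 [H3 [H4 [H5 [H6 [H7 H8]]]]]]]. tauto. Qed.

Lemma bD_seqcomp n U rho grad hess : SPC_setup n U rho grad hess -> seqcomp (2*n) (bD n U rho).
Proof. intros HS. destruct (spc_unpack _ _ _ _ _ HS) as [[HUp HUo] [[Hgr _] [[M HM] [HDU _]]]].
 intros u Hu.
 assert (Hb : forall k i, Rabs (u k i) <= M + 1).
 { intros k i. destruct (Hu k) as [[Hp Hc] _]. destruct (lt_dec i (2*n)%nat).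
   - destruct (Hc 1 ltac:(lra)) as [y [Hy Hd]]. pose proof (HM y Hy) as E1.
     pose proof (vnorm_diff (2*n)%nat (u k) y) as E2. rewrite vnorm_sub_sym in E2. pose proof (coord_le_vnorm (2*n)%nat (u k) i l). lra.
   - rewrite Hp by lia. rewrite Rabs_R0. destruct (Hc 1 ltac:(lra)) as [y [Hy _]].
     pose proof (HM y Hy). pose proof (vnorm_nonneg (2*n)%nat y). lra. }
 destruct (BWm u (M+1) Hb (2*n)%nat) as [phi [L [Hphi HL]]].
 set (x := fun i => if Nat.ltb i (2*n)%nat then L i else 0).
 assert (Hconv : forall eps, 0 < eps -> exists N, forall k, (N <= k)%nat -> vnorm (2*n)%nat (vsub (u (phi k)) x) < eps).
 { intros eps He. destruct (HL eps He) as [N HN]. exists N. intros k Hk. eapply Rle_lt_trans. apply vnorm_le_sumabs.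
   erewrite sumR_ext. apply (HN k Hk). intros i Hi. unfold vsub, x. destruct (Nat.ltb_spec i (2*n)%nat); auto. lia. }
 exists phi, x. split; auto. split; auto.
 assert (Hxp : is_pt (2*n)%nat x). { intros i Hi. unfold x. destruct (Nat.ltb_spec i (2*n)%nat); auto. lia. }
 split. split; auto.
 - intros eps He. destruct (Hconv (eps/2) ltac:(lra)) as [N HN]. specialize (HN N (le_n _)).
   destruct (Hu (phi N)) as [[_ Hc] _]. destruct (Hc (eps/2) ltac:(lra)) as [y [Hy Hd]].
   exists y. split; auto. pose proof (vnorm_sub_triang (2*n)%nat y (u (phi N)) x). lra.
 - intros [HUx Hrx]. destruct (HUo x HUx) as [r [Hr Hball]].
   destruct (has_grad_cont (2*n)%nat rho x (grad x) (Hgr x HUx) (- rho x) ltac:(lra)) as [d [Hd Hcont]].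
   destruct (Hconv (Rmin r d) (Rmin_pos _ _ Hr Hd)) as [N HN]. specialize (HN N (le_n _)).
   destruct (Hu (phi N)) as [[Hp _] Hnd]. apply Hnd.
   assert (vnorm (2*n)%nat (vsub (u (phi N)) x) < r) by (eapply Rlt_le_trans; [apply HN|apply Rmin_l]).
   assert (vnorm (2*n)%nat (vsub (u (phi N)) x) < d) by (eapply Rlt_le_trans; [apply HN|apply Rmin_r]).
   split. apply Hball; auto. specialize (Hcont (u (phi N)) Hp H0). apply Rabs_lt_inv in Hcont.
   lra.
Qed.
Lemma fin_min N (P : nat -> R -> Prop) :
  (forall i d d', 0 < d' <= d -> P i d -> P i d') ->
  (forall i, (i < N)%nat -> exists d, 0 < d /\ P i d) -> exists d, 0 < d /\ forall i, (i < N)%nat -> P i d.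
Proof. intros Hm. induction N; intros H.
 - exists 1. split. lra. intros; lia.
 - destruct IHN as [d1 [H1 H1']]. intros; apply H; lia.
   destruct (H N ltac:(lia)) as [d2 [H2 H2']]. exists (Rmin d1 d2). split. apply Rmin_pos; auto.
   intros i Hi. destruct (Nat.eq_dec i N). subst. apply (Hm N d2). split. apply Rmin_pos; auto. apply Rmin_r. auto.
   apply (Hm i d1). split. apply Rmin_pos; auto. apply Rmin_l. apply H1'; lia.
Qed.

Lemma fin_min2 N1 N2 (P : nat -> nat -> R -> Prop) :
  (forall i j d d', 0 < d' <= d -> P i j d -> P i j d') ->
  (forall i j, (i < N1)%nat -> (j < N2)%nat -> exists d, 0 < d /\ P i j d) ->
  exists d, 0 < d /\ forall i j, (i < N1)%nat -> (j < N2)%nat -> P i j d.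
Proof. intros Hm H. destruct (fin_min N1 (fun i d => forall j, (j < N2)%nat -> P i j d)) as [d [Hd Hd']].
 intros i d d' Hd Hp j Hj. apply (Hm i j d d'); auto.
 intros i Hi. apply fin_min. intros; eapply Hm; eauto. intros j Hj; apply H; auto.
 exists d. split; auto. Qed.

Lemma sum2_abs_ge N1 N2 (f : nat -> nat -> R) i j : (i < N1)%nat -> (j < N2)%nat ->
  Rabs (f i j) <= sumR N1 (fun i => sumR N2 (fun j => Rabs (f i j))).
Proof. intros Hi Hj.
 assert (H1 : Rabs (f i j) <= sumR N2 (fun j => Rabs (f i j))).
 { apply (sumR_term N2 (fun j => Rabs (f i j))); auto. intros; apply Rabs_pos. }
 assert (H2 : sumR N2 (fun j => Rabs (f i j)) <= sumR N1 (fun i => sumR N2 (fun j => Rabs (f i j)))).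
 { apply (sumR_term N1 (fun i => sumR N2 (fun j => Rabs (f i j)))); auto.
   intros; apply sumR_nonneg; intros; apply Rabs_pos. }
 lra. Qed.

Section Unif.
Variables (m : nat) (K G : pt -> Prop).
Hypothesis HK : seqcomp m K.
Hypothesis HKG : forall x, K x -> G x.
Hypothesis HGo : open_in m G.

Lemma UC2 N1 N2 (f : nat -> nat -> pt -> R) :
  (forall i j, (i < N1)%nat -> (j < N2)%nat -> cont_on m G (f i j)) ->
  forall eta, 0 < eta -> exists lam, 0 < lam /\ forall w y, K w -> is_pt m y -> vnorm m (vsub y w) < lam ->
    G y /\ forall i j, (i < N1)%nat -> (j < N2)%nat -> Rabs (f i j y - f i j w) < eta.
Proof. intros Hc eta He.
 destruct (compact_unif m K (fun _ w _ y => G y /\ forall i j, (i < N1)%nat -> (j < N2)%nat -> Rabs (f i j y - f i j w) < eta) HK)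
   as [lam [C [Hl H]]].
 - intros w0 z0 Hw0 Hz0. destruct HGo as [Hp Ho]. destruct (Ho w0 (HKG w0 Hw0)) as [r [Hr Hball]].
   destruct (fin_min2 N1 N2 (fun i j d => forall y, G y -> vnorm m (vsub y w0) < d -> Rabs (f i j y - f i j w0) < eta/2)) as [d [Hd Hd']].
   + intros i j d d' Hdd Hp' y Hy Hyd. apply Hp'; auto. lra.
   + intros i j Hi Hj. apply (Hc i j Hi Hj w0 (HKG w0 Hw0) (eta/2) ltac:(lra)).
   + exists (Rmin r d), 0. split. apply Rmin_pos; auto. intros w z y Hw Hz Hy Hwd Hzd Hyd.
     assert (Hyr : vnorm m (vsub y w0) < r) by (eapply Rlt_le_trans; [apply Hyd|apply Rmin_l]).
     assert (Hyd2 : vnorm m (vsub y w0) < d) by (eapply Rlt_le_trans; [apply Hyd|apply Rmin_r]).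
     assert (Hwd2 : vnorm m (vsub w w0) < d) by (eapply Rlt_le_trans; [apply Hwd|apply Rmin_r]).
     assert (HGy : G y) by (apply Hball; auto). split; auto.
     intros i j Hi Hj. pose proof (Hd' i j Hi Hj y HGy Hyd2). pose proof (Hd' i j Hi Hj w (HKG w Hw) Hwd2).
     replace (f i j y - f i j w) with ((f i j y - f i j w0) - (f i j w - f i j w0)) by ring.
     eapply Rle_lt_trans. apply Rabs_triang. rewrite Rabs_Ropp. lra.
 - intros; auto.
 - exists lam. split; auto. intros w y Hw Hy Hd. apply (H w w y); auto.
Qed.

Lemma BND2 N1 N2 (f : nat -> nat -> pt -> R) :
  (forall i j, (i < N1)%nat -> (j < N2)%nat -> cont_on m G (f i j)) ->
  exists C, forall w, K w -> forall i j, (i < N1)%nat -> (j < N2)%nat -> Rabs (f i j w) <= C.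
Proof. intros Hc.
 destruct (compact_unif m K (fun C w _ _ => forall i j, (i < N1)%nat -> (j < N2)%nat -> Rabs (f i j w) <= C) HK)
   as [lam [C [Hl H]]].
 - intros w0 z0 Hw0 Hz0.
   destruct (fin_min2 N1 N2 (fun i j d => forall y, G y -> vnorm m (vsub y w0) < d -> Rabs (f i j y - f i j w0) < 1)) as [d [Hd Hd']].
   + intros i j d d' Hdd Hp' y Hy Hyd. apply Hp'; auto. lra.
   + intros i j Hi Hj. apply (Hc i j Hi Hj w0 (HKG w0 Hw0) 1 ltac:(lra)).
   + exists d, (sumR N1 (fun i => sumR N2 (fun j => Rabs (f i j w0))) + 1). split; auto. intros w z y Hw Hz Hy Hwd _ _.
     intros i j Hi Hj. pose proof (Hd' i j Hi Hj w (HKG w Hw) Hwd). pose proof (sum2_abs_ge N1 N2 (fun i j => f i j w0) i j Hi Hj).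
     simpl in H0. pose proof (Rabs_triang_inv (f i j w) (f i j w0)). lra.
 - intros C C' w z y HC Hp i j Hi Hj. specialize (Hp i j Hi Hj). lra.
 - exists C. intros w Hw. apply (H w w w); auto. apply (proj1 HGo); auto. rewrite vsub_self, vnorm_zero_vec. auto.
Qed.
End Unif.

Lemma grad_cont_on m U (f : pt -> R) (gr : pt -> pt) : (forall x, U x -> is_pt m x) ->
  (forall x, U x -> has_grad m f x (gr x)) -> cont_on m U f.
Proof. intros Hp H x Hx eps He. destruct (has_grad_cont m f x (gr x) (H x Hx) eps He) as [d [Hd Hc]].
 exists d. split; auto. Qed.
Lemma UCg m K G (f1 f2 : pt -> pt -> R) : seqcomp m K -> (forall x, K x -> G x) -> open_in m G ->
  cont2_on m G f1 -> cont2_on m G f2 ->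
  forall eta, 0 < eta -> exists lam, 0 < lam /\ forall w z y, K w -> K z -> is_pt m y -> vnorm m (vsub y w) < lam ->
    G y /\ Rabs (f1 y z - f1 w z) < eta /\ Rabs (f2 y z - f2 w z) < eta.
Proof. intros HK HKG [HGp HGo] H1 H2 eta He.
 destruct (compact_unif m K (fun _ w z y => G y /\ Rabs (f1 y z - f1 w z) < eta /\ Rabs (f2 y z - f2 w z) < eta) HK)
   as [lam [C [Hl H]]].
 - intros w0 z0 Hw0 Hz0. destruct (HGo w0 (HKG w0 Hw0)) as [r [Hr Hball]].
   destruct (H1 w0 z0 (HKG w0 Hw0) (HKG z0 Hz0) (eta/2) ltac:(lra)) as [d1 [Hd1 Hc1]].
   destruct (H2 w0 z0 (HKG w0 Hw0) (HKG z0 Hz0) (eta/2) ltac:(lra)) as [d2 [Hd2 Hc2]].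
   exists (Rmin r (Rmin d1 d2)), 0. split. repeat apply Rmin_pos; auto.
   intros w z y Hw Hz Hy Hwd Hzd Hyd.
   pose proof (Rmin_l r (Rmin d1 d2)). pose proof (Rmin_r r (Rmin d1 d2)). pose proof (Rmin_l d1 d2). pose proof (Rmin_r d1 d2).
   assert (HGy : G y) by (apply Hball; auto; lra). split; auto.
   pose proof (Hc1 y z HGy (HKG z Hz) ltac:(lra) ltac:(lra)). pose proof (Hc1 w z (HKG w Hw) (HKG z Hz) ltac:(lra) ltac:(lra)).
   pose proof (Hc2 y z HGy (HKG z Hz) ltac:(lra) ltac:(lra)). pose proof (Hc2 w z (HKG w Hw) (HKG z Hz) ltac:(lra) ltac:(lra)).
   split.
   + replace (f1 y z - f1 w z) with ((f1 y z - f1 w0 z0) - (f1 w z - f1 w0 z0)) by ring.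
     eapply Rle_lt_trans. apply Rabs_triang. rewrite Rabs_Ropp. lra.
   + replace (f2 y z - f2 w z) with ((f2 y z - f2 w0 z0) - (f2 w z - f2 w0 z0)) by ring.
     eapply Rle_lt_trans. apply Rabs_triang. rewrite Rabs_Ropp. lra.
 - intros; auto.
 - exists lam. split; [auto|]. intros w z y ? ? ? ?; apply (H w z y); auto.
Qed.

Lemma dot_scal_r m x a y : dot m x (vscal a y) = a * dot m x y.
Proof. unfold dot, vscal. rewrite <- sumR_scal. apply sumR_ext; intros; ring. Qed.

Lemma deriv_line m f w v gr th : is_pt m w -> is_pt m v -> has_grad m f (vadd w (vscal th v)) gr ->
  derivable_pt_lim (fun s => f (vadd w (vscal s v))) th (dot m gr v).
Proof. intros Hw Hv [Hgp Hg] eps He.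
 set (Nv := vnorm m v). assert (HN : 0 <= Nv) by apply vnorm_nonneg.
 destruct (Hg (eps / (2 * (Nv + 1))) ltac:(apply Rdiv_lt_0_compat; lra)) as [del [Hdel Hd]].
 assert (Hpos : 0 < del / (Nv + 1)) by (apply Rdiv_lt_0_compat; lra).
 exists (mkposreal _ Hpos). simpl. intros h Hh Hhd.
 set (p := vadd w (vscal th v)) in *.
 assert (Hq : vsub (vadd w (vscal (th + h) v)) p = vscal h v).
 { apply functional_extensionality; intros i; unfold p, vsub, vadd, vscal; ring. }
 assert (Hqp : is_pt m (vadd w (vscal (th + h) v))) by (apply is_pt_vadd; auto; apply is_pt_vscal; auto).
 assert (Hn : vnorm m (vscal h v) = Rabs h * Nv) by apply vnorm_scal.
 assert (Hlt : vnorm m (vsub (vadd w (vscal (th + h) v)) p) < del).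
 { rewrite Hq, Hn. assert (Rabs h * Nv <= Rabs h * (Nv + 1)) by (apply Rmult_le_compat_l; [apply Rabs_pos|lra]).
   assert (Rabs h * (Nv+1) < del). { apply (Rmult_lt_reg_r (/ (Nv+1))). apply Rinv_0_lt_compat; lra.
     rewrite Rmult_assoc, Rinv_r by lra. unfold Rdiv in Hhd. lra. } lra. }
 specialize (Hd _ Hqp Hlt). rewrite Hq, Hn, dot_scal_r in Hd.
 assert (Habs : 0 < Rabs h) by (apply Rabs_pos_lt; auto).
 replace ((f (vadd w (vscal (th + h) v)) - f p) / h - dot m gr v) with
   ((f (vadd w (vscal (th + h) v)) - f p - h * dot m gr v) / h) by (field; auto).
 unfold Rdiv. rewrite Rabs_mult, Rabs_inv.
 apply (Rmult_lt_reg_r (Rabs h)); auto. rewrite Rmult_assoc, Rinv_l by lra.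
 assert (eps / (2 * (Nv + 1)) * (Rabs h * Nv) < eps * Rabs h).
 { replace (eps / (2 * (Nv + 1)) * (Rabs h * Nv)) with ((eps * Rabs h) * (Nv / (2 * (Nv+1)))) by (field; lra).
   assert (Nv / (2 * (Nv + 1)) < 1). { apply (Rmult_lt_reg_r (2*(Nv+1))). lra. field_simplify; lra. }
   assert (0 < eps * Rabs h) by (apply Rmult_lt_0_compat; lra). nra. }
 lra.
Qed.

Lemma lip_seg m f (gr : pt -> pt) w y C : is_pt m w -> is_pt m y ->
  (forall th, 0 <= th <= 1 -> has_grad m f (vadd w (vscal th (vsub y w))) (gr (vadd w (vscal th (vsub y w)))) /\
       sumR m (fun i => Rabs (gr (vadd w (vscal th (vsub y w))) i)) <= C) ->
  Rabs (f y - f w) <= C * vnorm m (vsub y w).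
Proof. intros Hw Hy H. set (v := vsub y w).
 assert (Hv : is_pt m v) by (apply is_pt_vsub; auto).
 destruct (MVT_cor2 (fun s => f (vadd w (vscal s v))) (fun s => dot m (gr (vadd w (vscal s v))) v) 0 1 ltac:(lra)) as [c [Hc Hc01]].
 { intros c Hc. apply deriv_line; auto. apply H; auto. }
 assert (E1 : vadd w (vscal 1 v) = y) by (apply functional_extensionality; intros; unfold v, vadd, vscal, vsub; ring).
 assert (E0 : vadd w (vscal 0 v) = w) by (apply functional_extensionality; intros; unfold v, vadd, vscal, vsub; ring).
 rewrite E1, E0 in Hc. rewrite Hc. replace (1 - 0) with 1 by ring. rewrite Rmult_1_r.
 eapply Rle_trans. apply dot_abs_bound. apply Rmult_le_compat_r. apply vnorm_nonneg. apply H; lra.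
Qed.
Lemma Cpx_eq (a b : Cpx) : fst a = fst b -> snd a = snd b -> a = b.
Proof. destruct a, b; simpl; intros; subst; auto. Qed.

Lemma T_value n grad w t : 0 < dot (2*n) (grad w) (grad w) ->
  Csum n (fun j => Cmul (drho_j grad w j) (zc (vscal t (Nfield (2*n) grad w)) j)) = (- t / 2, 0).
Proof. intros HD. set (D := dot (2*n) (grad w) (grad w)) in *.
 apply Cpx_eq.
 - rewrite Csum_fst. unfold drho_j, zc, Cmul, Nfield, vscal. cbn [fst snd]. fold D.
   rewrite (sumR_ext n _ (fun j => (- t / (2 * D)) * (grad w (2*j)%nat * grad w (2*j)%nat + grad w (2*j+1)%nat * grad w (2*j+1)%nat))).
   2:{ intros; field; lra. }
   rewrite sumR_scal.
   replace (sumR n (fun j => grad w (2*j)%nat * grad w (2*j)%nat + grad w (2*j+1)%nat * grad w (2*j+1)%nat)) with D.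
   field. lra. unfold D, dot. rewrite sumR_split2. reflexivity.
 - rewrite Csum_snd. unfold drho_j, zc, Cmul, Nfield, vscal. cbn [fst snd].
   rewrite (sumR_ext n _ (fun _ => 0)). rewrite sumR_const; ring. intros; ring.
Qed.

Lemma termP (D' D Z Z' V E Tt : Cpx) : fst Z' = fst Z + fst V -> snd Z' = snd Z + snd V ->
  fst V = fst Tt + fst E -> snd V = snd Tt + snd E ->
  Cabs (Csub (Cmul D' Z') (Cadd (Cmul D Z) (Cmul D Tt))) <= Cabs (Csub D' D) * (Cabs Z + Cabs V) + Cabs D * Cabs E.
Proof. intros H1 H2 H3 H4.
 assert (Eq : Csub (Cmul D' Z') (Cadd (Cmul D Z) (Cmul D Tt)) = Cadd (Cadd (Cmul (Csub D' D) Z) (Cmul (Csub D' D) V)) (Cmul D E)).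
 { apply Cpx_eq; unfold Csub, Cadd, Cmul; cbn [fst snd]; rewrite H1, H2;
   replace (fst Tt) with (fst V - fst E) by lra; replace (snd Tt) with (snd V - snd E) by lra; ring. }
 rewrite Eq. eapply Rle_trans. apply Cabs_triang. rewrite Cabs_mul.
 pose proof (Cabs_triang (Cmul (Csub D' D) Z) (Cmul (Csub D' D) V)). rewrite !Cabs_mul in H. nra. Qed.

Lemma termQ (A' A Zj Zk Zj' Zk' Vj Vk : Cpx) : fst Zj' = fst Zj + fst Vj -> snd Zj' = snd Zj + snd Vj ->
  fst Zk' = fst Zk + fst Vk -> snd Zk' = snd Zk + snd Vk ->
  Cabs (Csub (Cmul A' (Cmul Zj' Zk')) (Cmul A (Cmul Zj Zk))) <=
  Cabs (Csub A' A) * Cabs Zj * Cabs Zk + Cabs A' * (Cabs Vj * (Cabs Zk + Cabs Vk) + Cabs Zj * Cabs Vk).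
Proof. intros H1 H2 H3 H4.
 assert (Eq : Csub (Cmul A' (Cmul Zj' Zk')) (Cmul A (Cmul Zj Zk)) =
   Cadd (Cmul (Csub A' A) (Cmul Zj Zk)) (Cadd (Cmul A' (Cmul Vj Zk')) (Cmul A' (Cmul Zj Vk)))).
 { apply Cpx_eq; unfold Csub, Cadd, Cmul; cbn [fst snd]; rewrite H1, H2, H3, H4; ring. }
 rewrite Eq. eapply Rle_trans. apply Cabs_triang. eapply Rle_trans. apply Rplus_le_compat_l. apply Cabs_triang.
 rewrite !Cabs_mul.
 assert (Cabs Zk' <= Cabs Zk + Cabs Vk).
 { replace Zk' with (Cadd Zk Vk). apply Cabs_triang. apply Cpx_eq; unfold Cadd; simpl; lra. }
 pose proof (Cabs_nonneg A'). pose proof (Cabs_nonneg Vj). pose proof (Cabs_nonneg Zj). pose proof (Cabs_nonneg Vk).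
 assert (Cabs Vj * Cabs Zk' <= Cabs Vj * (Cabs Zk + Cabs Vk)) by (apply Rmult_le_compat_l; auto).
 nra. Qed.

Lemma Cabs_drho grad w j : Cabs (drho_j grad w j) <= Rabs (grad w (2*j)%nat) + Rabs (grad w (2*j+1)%nat).
Proof. eapply Rle_trans. apply Cabs_le_sum. unfold drho_j; cbn [fst snd].
 rewrite Rabs_Ropp, !Rabs_mult. rewrite Rabs_right by (pose proof Rinv_0_lt_compat 2; lra).
 pose proof (Rabs_pos (grad w (2*j)%nat)). pose proof (Rabs_pos (grad w (2*j+1)%nat)).
 assert (/2 < 1) by lra. nra. Qed.

Lemma Cabs_drho_diff grad y w j : Cabs (Csub (drho_j grad y j) (drho_j grad w j)) <=
  Rabs (grad y (2*j)%nat - grad w (2*j)%nat) + Rabs (grad y (2*j+1)%nat - grad w (2*j+1)%nat).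
Proof. eapply Rle_trans. apply Cabs_le_sum. unfold drho_j, Csub; cbn [fst snd].
 replace (/ 2 * grad y (2 * j)%nat - / 2 * grad w (2 * j)%nat) with (/2 * (grad y (2 * j)%nat - grad w (2 * j)%nat)) by ring.
 replace (- (/ 2 * grad y (2 * j + 1)%nat) - - (/ 2 * grad w (2 * j + 1)%nat)) with (- (/2 * (grad y (2 * j + 1)%nat - grad w (2 * j + 1)%nat))) by ring.
 rewrite Rabs_Ropp, !Rabs_mult. rewrite Rabs_right by (pose proof Rinv_0_lt_compat 2; lra).
 pose proof (Rabs_pos (grad y (2*j)%nat - grad w (2*j)%nat)). pose proof (Rabs_pos (grad y (2*j+1)%nat - grad w (2*j+1)%nat)).
 nra. Qed.

Lemma final_B (p q s R1 R2 : R) : 0 <= p -> 0 <= s ->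
  Cabs (R1, R2) <= (Cabs (p, q) + s) / 20 ->
  (Cabs (p, q) + s) / 4 <= Cabs (p + s/2 + R1, q + R2) /\ Cabs (p + s/2 + R1, q + R2) <= 2 * (Cabs (p, q) + s).
Proof. intros Hp Hs HR. set (N := Cabs (p,q)) in *. pose proof (Cabs_nonneg (p,q)). pose proof (Cabs_sq (p,q)). simpl in H0. fold N in H, H0.
 set (X := (p + s/2, q)).
 assert (HX1 : (N + s) / 3 <= Cabs X).
 { pose proof (Cabs_nonneg X). pose proof (Cabs_sq X). unfold X in H2; simpl in H2. fold X in H2.
   apply Rsqr_incr_0_var. unfold Rsqr. rewrite H2. pose proof (Rle_0_sqr (N - s)). unfold Rsqr in *. assert (0 <= p * s) by nra. nra. auto. }
 assert (HX2 : Cabs X <= N + s/2).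
 { replace X with (Cadd (p,q) (s/2, 0)) by (unfold X, Cadd; simpl; f_equal; ring).
   eapply Rle_trans. apply Cabs_triang. unfold Cabs at 2. simpl. replace (s/2*(s/2)+0*0) with ((s/2)*(s/2)) by ring.
   rewrite sqrt_square by lra. fold N. lra. }
 assert (E : (p + s / 2 + R1, q + R2) = Cadd X (R1, R2)) by (unfold X, Cadd; simpl; auto).
 rewrite E. split.
 - assert (EX : X = Csub (Cadd X (R1,R2)) (R1,R2)) by (apply Cpx_eq; unfold Csub, Cadd; simpl; ring).
   pose proof (Cabs_sub_triang (Cadd X (R1,R2)) (R1,R2)) as HT. rewrite <- EX in HT. lra.
 - pose proof (Cabs_triang X (R1, R2)). lra.
Qed.
Lemma mono2 a b c d : 0 <= a -> 0 <= c -> a <= b -> c <= d -> a * c <= b * d.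
Proof. intros. apply Rmult_le_compat; auto. Qed.

Lemma budget (nn L C1 r0 t0 Gam eps Aa eta c V Z E S Gm : R) :
  0 <= nn -> 0 <= L -> 0 <= C1 -> 0 <= Gam -> 0 <= Aa -> 0 <= eta -> 0 <= V -> 0 <= Z -> 0 <= E -> 0 <= S -> 0 < c ->
  V <= C1 * S -> Z <= r0 -> E <= eps * S -> S <= t0 -> c * (Z * Z) <= Gm ->
  (4*nn*L*C1 + 8*nn*nn*Aa*C1) * r0 <= 1/50 -> (4*nn*L*C1*C1 + 4*nn*nn*Aa*C1*C1) * t0 <= 1/50 ->
  4*nn*Gam*eps <= 1/100 -> 8*nn*nn*eta <= c/20 ->
  nn*(4*L*V*Z + 4*L*V*V + 4*Gam*E) + nn*nn*(8*eta*(Z*Z) + 8*Aa*V*Z + 4*Aa*V*V) <= (Gm + S)/20.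
Proof. intros Hn HL HC1 HG HA He HV HZ HE HS Hc H1 H2 H3 H4 H5 B1 B2 B3 B4.
 assert (VZ : V * Z <= (C1 * S) * r0) by (apply mono2; auto).
 assert (VV : V * V <= (C1 * S) * (C1 * t0)).
 { apply mono2; auto. eapply Rle_trans; [apply H1| apply Rmult_le_compat_l; auto]. }
 assert (ZZ : Z * Z <= Gm / c). { apply (Rmult_le_reg_l c); auto. field_simplify; lra. }
 assert (Hnn : 0 <= nn * nn) by nra.
 assert (T1 : nn*(4*L*V*Z) <= S * (4*nn*L*C1 * r0)).
 { replace (nn*(4*L*V*Z)) with ((4*nn*L) * (V*Z)) by ring. replace (S * (4*nn*L*C1*r0)) with ((4*nn*L) * ((C1*S)*r0)) by ring.
   apply Rmult_le_compat_l; auto. nra. }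
 assert (T2 : nn*(4*L*V*V) <= S * (4*nn*L*C1*C1*t0)).
 { replace (nn*(4*L*V*V)) with ((4*nn*L) * (V*V)) by ring. replace (S * (4*nn*L*C1*C1*t0)) with ((4*nn*L) * ((C1*S)*(C1*t0))) by ring.
   apply Rmult_le_compat_l; auto. nra. }
 assert (T3 : nn*(4*Gam*E) <= S * (4*nn*Gam*eps)).
 { replace (nn*(4*Gam*E)) with ((4*nn*Gam) * E) by ring. replace (S * (4*nn*Gam*eps)) with ((4*nn*Gam) * (eps*S)) by ring.
   apply Rmult_le_compat_l; auto. nra. }
 assert (T4 : nn*nn*(8*eta*(Z*Z)) <= Gm / 20).
 { replace (nn*nn*(8*eta*(Z*Z))) with ((8*nn*nn*eta) * (Z*Z)) by ring.
   assert (0 <= 8*nn*nn*eta) by nra. assert (0 <= Z*Z) by nra.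
   apply Rle_trans with ((c/20) * (Gm / c)). apply mono2; auto. right; field; lra. }
 assert (T5 : nn*nn*(8*Aa*V*Z) <= S * (8*nn*nn*Aa*C1*r0)).
 { replace (nn*nn*(8*Aa*V*Z)) with ((8*nn*nn*Aa) * (V*Z)) by ring. replace (S * (8*nn*nn*Aa*C1*r0)) with ((8*nn*nn*Aa) * ((C1*S)*r0)) by ring.
   apply Rmult_le_compat_l; auto. nra. }
 assert (T6 : nn*nn*(4*Aa*V*V) <= S * (4*nn*nn*Aa*C1*C1*t0)).
 { replace (nn*nn*(4*Aa*V*V)) with ((4*nn*nn*Aa) * (V*V)) by ring. replace (S * (4*nn*nn*Aa*C1*C1*t0)) with ((4*nn*nn*Aa) * ((C1*S)*(C1*t0))) by ring.
   apply Rmult_le_compat_l; auto. nra. }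
 assert (S1 : S * ((4*nn*L*C1 + 8*nn*nn*Aa*C1) * r0) <= S * (1/50)) by (apply Rmult_le_compat_l; auto).
 assert (S2 : S * ((4*nn*L*C1*C1 + 4*nn*nn*Aa*C1*C1) * t0) <= S * (1/50)) by (apply Rmult_le_compat_l; auto).
 assert (S3 : S * (4*nn*Gam*eps) <= S * (1/100)) by (apply Rmult_le_compat_l; auto).
 nra.
Qed.

Lemma Csum_add k f h : Cadd (Csum k f) (Csum k h) = Csum k (fun j => Cadd (f j) (h j)).
Proof. induction k; simpl. apply Cpx_eq; simpl; ring. rewrite <- IHk. apply Cpx_eq; unfold Cadd; simpl; ring. Qed.

Lemma split_err P' Q' P Q T : Cabs (Csub (Cadd P' Q') (Cadd (Cadd P Q) T)) <= Cabs (Csub P' (Cadd P T)) + Cabs (Csub Q' Q).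
Proof. replace (Csub (Cadd P' Q') (Cadd (Cadd P Q) T)) with (Cadd (Csub P' (Cadd P T)) (Csub Q' Q)).
 apply Cabs_triang. apply Cpx_eq; unfold Csub, Cadd; simpl; ring. Qed.
Lemma Ppart n grad y w z tau L Gam : 0 <= L ->
  (forall i, (i < 2*n)%nat -> Rabs (grad y i - grad w i) <= L * vnorm (2*n) (vsub y w)) ->
  vnorm (2*n) (grad w) <= Gam ->
  Cabs (Csub (pair_drho n grad y z) (Cadd (pair_drho n grad w z) (Csum n (fun j => Cmul (drho_j grad w j) (zc tau j))))) <=
  INR n * (4 * L * vnorm (2*n) (vsub y w) * vnorm (2*n) (vsub w z) + 4 * L * vnorm (2*n) (vsub y w) * vnorm (2*n) (vsub y w)
           + 4 * Gam * vnorm (2*n) (vsub y (vadd w tau))).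
Proof. intros HL Hlip HG. set (V := vnorm (2*n) (vsub y w)). set (Z := vnorm (2*n) (vsub w z)). set (E := vnorm (2*n) (vsub y (vadd w tau))).
 unfold pair_drho. rewrite Csum_add. eapply Rle_trans. apply Cabs_Csum_sub. apply sumR_le_const. intros j Hj.
 eapply Rle_trans. apply (termP _ _ (zc (vsub w z) j) _ (zc (vsub y w) j) (zc (vsub y (vadd w tau)) j) (zc tau j));
   unfold zc, vsub, vadd; cbn [fst snd]; ring.
 pose proof (Cabs_drho_diff grad y w j) as Hd. pose proof (Hlip (2*j)%nat ltac:(lia)). pose proof (Hlip (2*j+1)%nat ltac:(lia)).
 pose proof (Cabs_drho grad w j) as Hd0. pose proof (coord_le_vnorm (2*n) (grad w) (2*j)%nat ltac:(lia)).
 pose proof (coord_le_vnorm (2*n) (grad w) (2*j+1)%nat ltac:(lia)).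
 pose proof (Cabs_zc n (vsub w z) j Hj). pose proof (Cabs_zc n (vsub y w) j Hj). pose proof (Cabs_zc n (vsub y (vadd w tau)) j Hj).
 fold V Z E in H, H0, H3, H4, H5.
 assert (A1 : Cabs (Csub (drho_j grad y j) (drho_j grad w j)) <= 2 * L * V) by lra.
 assert (A2 : Cabs (drho_j grad w j) <= 2 * Gam) by lra.
 pose proof (Cabs_nonneg (Csub (drho_j grad y j) (drho_j grad w j))). pose proof (Cabs_nonneg (drho_j grad w j)).
 pose proof (Cabs_nonneg (zc (vsub w z) j)). pose proof (Cabs_nonneg (zc (vsub y w) j)). pose proof (Cabs_nonneg (zc (vsub y (vadd w tau)) j)).
 assert (M1 : Cabs (Csub (drho_j grad y j) (drho_j grad w j)) * (Cabs (zc (vsub w z) j) + Cabs (zc (vsub y w) j)) <= (2*L*V) * (2*Z + 2*V)).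
 { apply mono2; lra. }
 assert (M2 : Cabs (drho_j grad w j) * Cabs (zc (vsub y (vadd w tau)) j) <= (2*Gam) * (2*E)) by (apply mono2; lra).
 lra. Qed.

Lemma Qpart n a y w z Aa eta : 0 <= Aa -> 0 <= eta ->
  (forall j k, (j < n)%nat -> (k < n)%nat -> Cabs (a y j k) <= Aa /\ Cabs (Csub (a y j k) (a w j k)) <= 2 * eta) ->
  Cabs (Csub (Qform n a y (vsub y z)) (Qform n a w (vsub w z))) <=
  INR n * INR n * (8 * eta * (vnorm (2*n) (vsub w z) * vnorm (2*n) (vsub w z)) + 8 * Aa * vnorm (2*n) (vsub y w) * vnorm (2*n) (vsub w z)
     + 4 * Aa * vnorm (2*n) (vsub y w) * vnorm (2*n) (vsub y w)).
Proof. intros HA He Ha. set (V := vnorm (2*n) (vsub y w)). set (Z := vnorm (2*n) (vsub w z)).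
 unfold Qform. eapply Rle_trans. apply Cabs_Csum_sub. rewrite Rmult_assoc. apply sumR_le_const. intros j Hj.
 eapply Rle_trans. apply Cabs_Csum_sub. apply sumR_le_const. intros k Hk.
 eapply Rle_trans. apply (termQ _ _ _ _ _ _ (zc (vsub y w) j) (zc (vsub y w) k)); unfold zc, vsub; cbn [fst snd]; ring.
 destruct (Ha j k Hj Hk) as [Ha1 Ha2].
 pose proof (Cabs_zc n (vsub w z) j Hj). pose proof (Cabs_zc n (vsub w z) k Hk).
 pose proof (Cabs_zc n (vsub y w) j Hj). pose proof (Cabs_zc n (vsub y w) k Hk). fold V Z in H, H0, H1, H2.
 pose proof (Cabs_nonneg (zc (vsub w z) j)). pose proof (Cabs_nonneg (zc (vsub w z) k)).
 pose proof (Cabs_nonneg (zc (vsub y w) j)). pose proof (Cabs_nonneg (zc (vsub y w) k)).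
 pose proof (Cabs_nonneg (a y j k)). pose proof (Cabs_nonneg (Csub (a y j k) (a w j k))).
 assert (M1 : Cabs (Csub (a y j k) (a w j k)) * Cabs (zc (vsub w z) j) * Cabs (zc (vsub w z) k) <= (2*eta) * (2*Z) * (2*Z)).
 { apply mono2; try lra. apply Rmult_le_pos; lra. apply mono2; lra. }
 assert (M2 : Cabs (zc (vsub y w) j) * (Cabs (zc (vsub w z) k) + Cabs (zc (vsub y w) k)) + Cabs (zc (vsub w z) j) * Cabs (zc (vsub y w) k)
   <= (2*V) * (2*Z + 2*V) + (2*Z)*(2*V)).
 { apply Rplus_le_compat; apply mono2; lra. }
 assert (M3 : Cabs (a y j k) * (Cabs (zc (vsub y w) j) * (Cabs (zc (vsub w z) k) + Cabs (zc (vsub y w) k)) + Cabs (zc (vsub w z) j) * Cabs (zc (vsub y w) k))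
   <= Aa * ((2*V) * (2*Z + 2*V) + (2*Z)*(2*V))).
 { apply mono2; auto. assert (0 <= Cabs (zc (vsub y w) j) * (Cabs (zc (vsub w z) k) + Cabs (zc (vsub y w) k))) by (apply Rmult_le_pos; lra).
   assert (0 <= Cabs (zc (vsub w z) j) * Cabs (zc (vsub y w) k)) by (apply Rmult_le_pos; lra). lra. }
 lra. Qed.
Theorem mainTheorem9 (n : nat) (U : pt -> Prop) (rho : pt -> R)
    (grad : pt -> pt) (hess : pt -> nat -> pt)
    (Phi : R -> pt -> pt) (G : pt -> Prop) (g : pt -> pt -> Cpx) :
  (2 <= n)%nat ->
  SPC_setup n U rho grad hess ->
  is_flow n U rho grad Phi ->
  flow_expansion n U rho grad Phi ->
  LS_denominator n U rho grad G g ->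
  exists t0 A B, 0 < t0 /\ 0 < A /\ 0 < B /\
    forall t w z, - t0 < t < 0 -> bD n U rho w -> bD n U rho z ->
      A * (Cabs (g w z) + Rabs t) <= Cabs (g (Phi t w) z) /\
      Cabs (g (Phi t w) z) <= B * (Cabs (g w z) + Rabs t).
Proof.
 intros Hn HS HF HE HL.
 pose proof (bD_seqcomp _ _ _ _ _ HS) as HK.
 destruct (spc_unpack _ _ _ _ _ HS) as [[HUp HUo] [[Hgr [Hhg Hhc]] [_ [HDU Hgpos]]]].
 unfold is_flow in HF. destruct HF as [TT [W [HTT [_ [HbW [_ Hflow]]]]]].
 unfold flow_expansion in HE.
 unfold LS_denominator in HL.
 destruct HL as [HGo [HDG [HGU [Hc1 [Hc2 [_ [_ [[r [a [Hr [Ha Hnd]]]] [[c [Hc HRe]] _]]]]]]]]].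
 assert (HKU : forall x, bD n U rho x -> U x) by (intros x Hx; apply HDU, Hx).
 assert (HKG : forall x, bD n U rho x -> G x) by (intros x Hx; apply HDG, Hx).
 assert (HKp : forall x, bD n U rho x -> is_pt (2*n) x) by (intros x Hx; apply HUp, HKU, Hx).
 assert (F0 : forall z, bD n U rho z -> rho z <= 0).
 { intros z [[Hzp Hcl] _]. destruct (Rle_or_lt (rho z) 0) as [|Hpos]; auto. exfalso.
   destruct (has_grad_cont _ rho z (grad z) (Hgr z (HDU z (conj Hzp Hcl))) (rho z) Hpos) as [d [Hd Hcont]].
   destruct (Hcl d Hd) as [y [[HUy Hry] Hyd]]. specialize (Hcont y (HUp y HUy) Hyd).
   apply Rabs_lt_inv in Hcont. lra. }
 assert (F1 : forall w z, bD n U rho w -> bD n U rho z ->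
     c * (vnorm (2*n) (vsub w z) * vnorm (2*n) (vsub w z)) <= fst (g w z)).
 { intros w z Hw Hz. specialize (HRe w z (proj1 Hz) Hw). pose proof (F0 z Hz).
   assert (vnorm (2 * n) (vsub w z) ^ 2 = vnorm (2*n) (vsub w z) * vnorm (2*n) (vsub w z)) by ring.
   rewrite H0 in HRe. assert (0 <= c * - rho z) by (apply Rmult_le_pos; lra). lra. }
 assert (F1' : forall w z, bD n U rho w -> bD n U rho z ->
     c * (vnorm (2*n) (vsub w z) * vnorm (2*n) (vsub w z)) <= Cabs (g w z)).
 { intros w z Hw Hz. pose proof (F1 w z Hw Hz). pose proof (Cabs_fst (g w z)). pose proof (Rle_abs (fst (g w z))). lra. }
 assert (Hge0 : forall w z, bD n U rho w -> bD n U rho z -> 0 <= fst (g w z)).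
 { intros w z Hw Hz. pose proof (F1 w z Hw Hz). assert (0 <= c * (vnorm (2*n) (vsub w z) * vnorm (2*n) (vsub w z))).
   apply Rmult_le_pos. lra. apply Rmult_le_pos; apply vnorm_nonneg. lra. }
 destruct (UC2 (2*n) (bD n U rho) U HK HKU (conj HUp HUo) (2*n) (2*n) (fun i j y => hess y i j) Hhc 1 ltac:(lra))
   as [lamH [HlamH HH1]].
 destruct (BND2 (2*n) (bD n U rho) U HK HKU (conj HUp HUo) (2*n) (2*n) (fun i j y => hess y i j) Hhc) as [CH0 HCH0].
 set (L := INR (2*n) * (Rabs CH0 + 1)).
 assert (HL0 : 0 <= L) by (unfold L; apply Rmult_le_pos; [apply pos_INR| pose proof (Rabs_pos CH0); lra]).
 assert (Hlip : forall w y i, bD n U rho w -> is_pt (2*n) y -> vnorm (2*n) (vsub y w) < lamH -> (i < 2*n)%nat ->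
    U y /\ Rabs (grad y i - grad w i) <= L * vnorm (2*n) (vsub y w)).
 { intros w y i Hw Hy Hd Hi. split. apply (HH1 w y Hw Hy Hd).
   apply (lip_seg (2*n) (fun x => grad x i) (fun p => hess p i) w y L (HKp w Hw) Hy).
   intros th Hth. set (p := vadd w (vscal th (vsub y w))).
   assert (Hpw : vsub p w = vscal th (vsub y w)) by (apply functional_extensionality; intros; unfold p, vsub, vadd, vscal; ring).
   assert (Hpp : is_pt (2*n) p) by (apply is_pt_vadd; [apply HKp; auto| apply is_pt_vscal, is_pt_vsub; auto]).
   assert (Hpd : vnorm (2*n) (vsub p w) < lamH).
   { rewrite Hpw, vnorm_scal. rewrite Rabs_right by lra. pose proof (vnorm_nonneg (2*n) (vsub y w)). nra. }
   destruct (HH1 w p Hw Hpp Hpd) as [HUp' Hb]. split. apply Hhg; auto.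
   unfold L. apply sumR_le_const. intros j Hj. specialize (Hb i j Hi Hj). simpl in Hb.
   pose proof (HCH0 w Hw i j Hi Hj). pose proof (Rle_abs CH0).
   pose proof (Rabs_triang_inv (hess p i j) (hess w i j)). lra. }
 assert (Hgc : forall i j, (i < 2*n)%nat -> (j < 1)%nat -> cont_on (2*n) U (fun y => grad y i)).
 { intros i j Hi _. apply (grad_cont_on (2*n) U _ (fun x => hess x i) HUp). intros x Hx; apply Hhg; auto. }
 destruct (BND2 (2*n) (bD n U rho) U HK HKU (conj HUp HUo) (2*n) 1 (fun i j y => grad y i) Hgc) as [CG0 HCG0].
 set (Gam := INR (2*n) * Rabs CG0 + 1).
 assert (HGam0 : 1 <= Gam) by (unfold Gam; pose proof (pos_INR (2*n)); pose proof (Rabs_pos CG0); nra).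
 assert (HGam : forall w, bD n U rho w -> vnorm (2*n) (grad w) <= Gam).
 { intros w Hw. eapply Rle_trans. apply vnorm_le_sumabs. unfold Gam.
   assert (sumR (2*n) (fun i => Rabs (grad w i)) <= INR (2*n) * Rabs CG0).
   { apply sumR_le_const. intros i Hi. pose proof (HCG0 w Hw i 0%nat Hi ltac:(lia)). simpl in H. pose proof (Rle_abs CG0). lra. }
   lra. }
 destruct (compact_unif (2*n) (bD n U rho) (fun C w _ _ => 0 < C /\ 1 <= C * vnorm (2*n) (grad w)) HK) as [lamc [Cg [Hlamc HCg]]].
 { intros w0 z0 Hw0 Hz0. set (g0 := vnorm (2*n) (grad w0)). assert (Hg0 : 0 < g0) by (apply Hgpos; auto).
   set (ML := INR (2*n) * L). assert (HML : 0 <= ML) by (unfold ML; apply Rmult_le_pos; auto; apply pos_INR).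
   exists (Rmin lamH (g0 / (2 * (ML + 1)))), (2 / g0). split. apply Rmin_pos; auto. apply Rdiv_lt_0_compat; lra.
   intros w z y Hw Hz Hy Hwd _ _.
   assert (Hwd1 : vnorm (2*n) (vsub w w0) < lamH) by (eapply Rlt_le_trans; [apply Hwd| apply Rmin_l]).
   assert (Hwd2 : vnorm (2*n) (vsub w w0) < g0 / (2 * (ML + 1))) by (eapply Rlt_le_trans; [apply Hwd| apply Rmin_r]).
   assert (Hdiff : vnorm (2*n) (vsub (grad w0) (grad w)) <= ML * vnorm (2*n) (vsub w w0)).
   { eapply Rle_trans. apply vnorm_le_sumabs. unfold ML. rewrite Rmult_assoc. apply sumR_le_const. intros i Hi.
     unfold vsub at 1. rewrite <- Rabs_Ropp. replace (- (grad w0 i - grad w i)) with (grad w i - grad w0 i) by ring.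
     apply (Hlip w0 w i Hw0 (HKp w Hw) Hwd1 Hi). }
   pose proof (vnorm_diff (2*n) (grad w0) (grad w)). fold g0 in H.
   assert (ML * vnorm (2*n) (vsub w w0) <= g0 / 2).
   { apply Rle_trans with (ML * (g0 / (2 * (ML + 1)))). apply Rmult_le_compat_l; lra.
     apply (Rmult_le_reg_r (2*(ML+1))). lra. field_simplify; nra. }
   split. apply Rdiv_lt_0_compat; lra.
   apply (Rmult_le_reg_l (g0/2)). lra. field_simplify; lra. }
 { intros C C' w z y HCC [HC HC']. split. lra. pose proof (vnorm_nonneg (2*n) (grad w)). nra. }
 assert (Hlow : forall w, bD n U rho w -> 0 < Cg /\ 1 <= Cg * vnorm (2*n) (grad w)).
 { intros w Hw. apply (HCg w w w Hw Hw (HKp w Hw)). rewrite vsub_self, vnorm_zero_vec. auto. }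
 set (C1 := Rabs Cg + 1). assert (HC1 : 1 <= C1) by (unfold C1; pose proof (Rabs_pos Cg); lra).
 assert (Haf : forall j k, (j < n)%nat -> (k < n)%nat -> cont_on (2*n) G (fun w => fst (a w j k))) by (intros; apply Ha; auto).
 assert (Has : forall j k, (j < n)%nat -> (k < n)%nat -> cont_on (2*n) G (fun w => snd (a w j k))) by (intros; apply Ha; auto).
 destruct (BND2 (2*n) (bD n U rho) G HK HKG HGo n n (fun j k w => fst (a w j k)) Haf) as [Af HAf].
 destruct (BND2 (2*n) (bD n U rho) G HK HKG HGo n n (fun j k w => snd (a w j k)) Has) as [As HAs].
 set (nn := INR n). assert (Hnn : 2 <= nn) by (unfold nn; apply le_INR in Hn; simpl in Hn; lra).
 set (etaa := Rmin 1 (c / (160 * (nn * nn)))).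
 assert (Heta0 : 0 < etaa) by (unfold etaa; apply Rmin_pos; [lra| apply Rdiv_lt_0_compat; nra]).
 assert (Heta1 : etaa <= 1) by apply Rmin_l.
 assert (Heta2 : 8 * nn * nn * etaa <= c / 20).
 { apply Rle_trans with (8 * nn * nn * (c / (160 * (nn * nn)))). apply Rmult_le_compat_l. nra. apply Rmin_r.
   right. field. nra. }
 destruct (UC2 (2*n) (bD n U rho) G HK HKG HGo n n (fun j k w => fst (a w j k)) Haf etaa Heta0) as [lamA1 [HlA1 HA1]].
 destruct (UC2 (2*n) (bD n U rho) G HK HKG HGo n n (fun j k w => snd (a w j k)) Has etaa Heta0) as [lamA2 [HlA2 HA2]].
 set (lamA := Rmin lamA1 lamA2). assert (HlA : 0 < lamA) by (apply Rmin_pos; auto).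
 set (Aa := Rabs Af + Rabs As + 2). assert (HAa : 0 <= Aa) by (unfold Aa; pose proof (Rabs_pos Af); pose proof (Rabs_pos As); lra).
 assert (HCgC1 : Cg + 1 <= C1) by (unfold C1; pose proof (Rle_abs Cg); lra).
 assert (HAaB : forall w y j k, bD n U rho w -> is_pt (2*n) y -> vnorm (2*n) (vsub y w) < lamA -> (j < n)%nat -> (k < n)%nat ->
    G y /\ Cabs (a y j k) <= Aa /\ Cabs (Csub (a y j k) (a w j k)) <= 2 * etaa).
 { intros w y j k Hw Hy Hd Hj Hk.
   assert (Hd1 : vnorm (2*n) (vsub y w) < lamA1) by (eapply Rlt_le_trans; [apply Hd| apply Rmin_l]).
   assert (Hd2 : vnorm (2*n) (vsub y w) < lamA2) by (eapply Rlt_le_trans; [apply Hd| apply Rmin_r]).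
   destruct (HA1 w y Hw Hy Hd1) as [HGy H1]. destruct (HA2 w y Hw Hy Hd2) as [_ H2].
   specialize (H1 j k Hj Hk). specialize (H2 j k Hj Hk). simpl in H1, H2.
   pose proof (HAf w Hw j k Hj Hk). pose proof (HAs w Hw j k Hj Hk). simpl in H, H0.
   split; auto. split.
   - eapply Rle_trans. apply Cabs_le_sum. unfold Aa. pose proof (Rle_abs Af). pose proof (Rle_abs As).
     pose proof (Rabs_triang_inv (fst (a y j k)) (fst (a w j k))). pose proof (Rabs_triang_inv (snd (a y j k)) (snd (a w j k))). lra.
   - eapply Rle_trans. apply Cabs_le_sum. unfold Csub; cbn [fst snd]. lra. }
 clearbody L Gam C1 Aa.
 set (K1 := 4*nn*L*C1 + 8*nn*nn*Aa*C1). assert (HnL : 0 <= nn * L) by (apply Rmult_le_pos; lra).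
 assert (HnA : 0 <= nn * nn * Aa) by (apply Rmult_le_pos; [apply Rmult_le_pos|]; lra).
 assert (HK1 : 0 <= K1) by (unfold K1; assert (0 <= nn*L*C1) by (apply Rmult_le_pos; lra); assert (0 <= nn*nn*Aa*C1) by (apply Rmult_le_pos; lra); lra).
 set (r0 := Rmin (r/2) (1 / (50 * (K1 + 1)))).
 assert (Hr0 : 0 < r0) by (apply Rmin_pos; [lra| apply Rdiv_lt_0_compat; lra]).
 assert (Hr0r : r0 <= r/2) by apply Rmin_l.
 assert (B1 : K1 * r0 <= 1/50).
 { apply Rle_trans with (K1 * (1 / (50 * (K1 + 1)))). apply Rmult_le_compat_l; auto. apply Rmin_r.
   apply (Rmult_le_reg_r (50 * (K1+1))). lra. field_simplify; lra. }
 set (eps := Rmin 1 (1 / (400 * nn * Gam + 1))).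
 assert (Heps : 0 < eps) by (unfold eps; apply Rmin_pos; [lra| apply Rdiv_lt_0_compat; nra]).
 assert (Heps1 : eps <= 1) by apply Rmin_l.
 assert (B3 : 4 * nn * Gam * eps <= 1/100).
 { apply Rle_trans with (4 * nn * Gam * (1 / (400 * nn * Gam + 1))). apply Rmult_le_compat_l. nra. apply Rmin_r.
   apply (Rmult_le_reg_r (400 * nn * Gam + 1)). nra. field_simplify; nra. }
 destruct (HE eps Heps) as [delf [Hdelf Hexp]].
 destruct (UCg (2*n) (bD n U rho) G (fun w z => fst (g w z)) (fun w z => snd (g w z)) HK HKG HGo Hc1 Hc2 (c * r0 * r0 / 4))
   as [lamg [Hlamg Hug]]. { apply Rdiv_lt_0_compat; [|lra]. repeat apply Rmult_lt_0_compat; lra. }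
 set (K2 := 4*nn*L*C1*C1 + 4*nn*nn*Aa*C1*C1). assert (HK2 : 0 <= K2) by (unfold K2; assert (0 <= nn*L*C1*C1) by (repeat apply Rmult_le_pos; lra); assert (0 <= nn*nn*Aa*C1*C1) by (repeat apply Rmult_le_pos; lra); lra).
 set (t0 := Rmin (Rmin (Rmin delf TT) (Rmin (c*r0*r0) (1/(50*(K2+1))))) (Rmin (Rmin (lamH/C1) (lamA/C1)) (Rmin (lamg/C1) (r/(2*C1))))).
 assert (Ht0 : 0 < t0).
 { unfold t0. repeat apply Rmin_pos; try (apply Rdiv_lt_0_compat; lra); try lra; repeat apply Rmult_lt_0_compat; lra. }
 assert (B2 : K2 * t0 <= 1/50).
 { apply Rle_trans with (K2 * (1 / (50 * (K2 + 1)))). apply Rmult_le_compat_l; auto.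
   unfold t0. eapply Rle_trans. apply Rmin_l. eapply Rle_trans. apply Rmin_r. apply Rmin_r.
   apply (Rmult_le_reg_r (50 * (K2+1))). lra. field_simplify; lra. }
 assert (Ht0a : t0 <= delf /\ t0 <= TT /\ t0 <= c*r0*r0 /\ C1 * t0 <= lamH /\ C1 * t0 <= lamA /\ C1 * t0 <= lamg /\ C1 * t0 <= r/2).
 { unfold t0. set (X1 := delf). set (X2 := TT). set (X3 := c*r0*r0). set (X4 := 1/(50*(K2+1))).
   set (Y1 := lamH/C1). set (Y2 := lamA/C1). set (Y3 := lamg/C1). set (Y4 := r/(2*C1)).
   pose proof (Rmin_l (Rmin (Rmin X1 X2) (Rmin X3 X4)) (Rmin (Rmin Y1 Y2) (Rmin Y3 Y4))).
   pose proof (Rmin_r (Rmin (Rmin X1 X2) (Rmin X3 X4)) (Rmin (Rmin Y1 Y2) (Rmin Y3 Y4))).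
   pose proof (Rmin_l (Rmin X1 X2) (Rmin X3 X4)). pose proof (Rmin_r (Rmin X1 X2) (Rmin X3 X4)).
   pose proof (Rmin_l (Rmin Y1 Y2) (Rmin Y3 Y4)). pose proof (Rmin_r (Rmin Y1 Y2) (Rmin Y3 Y4)).
   pose proof (Rmin_l X1 X2). pose proof (Rmin_r X1 X2). pose proof (Rmin_l X3 X4). pose proof (Rmin_r X3 X4).
   pose proof (Rmin_l Y1 Y2). pose proof (Rmin_r Y1 Y2). pose proof (Rmin_l Y3 Y4). pose proof (Rmin_r Y3 Y4).
   set (T0 := Rmin (Rmin (Rmin X1 X2) (Rmin X3 X4)) (Rmin (Rmin Y1 Y2) (Rmin Y3 Y4))) in *.
   assert (T0 <= Y1) by lra. assert (T0 <= Y2) by lra. assert (T0 <= Y3) by lra. assert (T0 <= Y4) by lra.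
   assert (HZC : forall Z, T0 <= Z / C1 -> C1 * T0 <= Z). { intros Z HZ. apply (Rmult_le_compat_l C1) in HZ; [|lra].
     replace (C1 * (Z / C1)) with Z in HZ by (field; lra). auto. }
   repeat split; try lra. apply HZC; auto. apply HZC; auto. apply HZC; auto.
   apply HZC. replace ((r/2)/C1) with Y4 by (unfold Y4; field; lra); lra. }
 exists t0, (1/4), 2. split; [auto|]. split; [lra|]. split; [lra|].
 intros t w z Ht Hw Hz.
 set (s := - t). assert (Hs : 0 < s) by (unfold s; lra). assert (Hst : s < t0) by (unfold s; lra). assert (Hts : Rabs t = s) by (unfold s; apply Rabs_left; lra).
 rewrite Hts. destruct Ht0a as [T1 [T2 [T3 [T4 [T5 [T6 T7]]]]]].
 set (y := Phi t w).
 assert (Hy : is_pt (2*n) y). { apply HUp. apply (proj2 (Hflow w (HbW w Hw)) t). lra. }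
 set (tau := vscal t (Nfield (2*n) grad w)).
 assert (He : vnorm (2*n) (vsub y (vadd w tau)) <= eps * s). { rewrite <- Hts. apply Hexp; auto. rewrite Hts; unfold s; lra. }
 destruct (Hlow w Hw) as [HCg0 HCgw].
 assert (Hgw0 : 0 < vnorm (2*n) (grad w)) by (apply Hgpos; auto).
 assert (Htau : vnorm (2*n) tau <= s * Cg).
 { unfold tau, Nfield. rewrite !vnorm_scal, Hts. rewrite <- vnorm_sq. rewrite Rabs_Ropp, Rabs_inv, Rabs_right.
   2:{ apply Rle_ge, Rmult_le_pos; apply vnorm_nonneg. }
   replace (/ (vnorm (2 * n) (grad w) * vnorm (2 * n) (grad w)) * vnorm (2 * n) (grad w)) with (/ vnorm (2*n) (grad w)) by (field; lra).
   apply Rmult_le_compat_l. lra. apply (Rmult_le_reg_r (vnorm (2*n) (grad w))); auto. rewrite Rinv_l by lra. lra. }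
 assert (Hveq : vsub y w = vadd tau (vsub y (vadd w tau))) by (apply functional_extensionality; intros; unfold vsub, vadd; ring).
 assert (Hv : vnorm (2*n) (vsub y w) <= C1 * s).
 { rewrite Hveq. eapply Rle_trans. apply vnorm_triang. assert (eps * s <= s) by nra. assert (s * (Cg + 1) <= s * C1) by (apply Rmult_le_compat_l; lra). lra. }
 assert (HCs : C1 * s < C1 * t0) by (apply Rmult_lt_compat_l; lra).
 destruct (Rlt_or_le (vnorm (2*n) (vsub w z)) r0) as [Hnear | Hfar].
 -
   assert (HvA : vnorm (2*n) (vsub y w) < lamA) by lra.
   assert (HvH : vnorm (2*n) (vsub y w) < lamH) by lra.
   assert (Hn0 : (0 < n)%nat) by lia.
   destruct (HAaB w y 0%nat 0%nat Hw Hy HvA Hn0 Hn0) as [HGy _].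
   assert (Hwz : vnorm (2*n) (vsub w z) < r) by lra.
   assert (Hyz : vnorm (2*n) (vsub y z) < r).
   { pose proof (vnorm_sub_triang (2*n) y w z). lra. }
   pose proof (Hnd y z HGy (HKG z Hz) Hyz) as Ey. pose proof (Hnd w z (HKG w Hw) (HKG z Hz) Hwz) as Ew.
   assert (HTv : Csum n (fun j => Cmul (drho_j grad w j) (zc tau j)) = (- t / 2, 0)).
   { apply T_value. rewrite <- vnorm_sq. nra. }
   set (Gm := Cabs (g w z)).
   assert (HGm : c * (vnorm (2*n) (vsub w z) * vnorm (2*n) (vsub w z)) <= Gm) by (apply F1'; auto).
   assert (HR : Cabs (Csub (g y z) (Cadd (g w z) (- t / 2, 0))) <= (Gm + s) / 20).
   { rewrite <- HTv, Ey, Ew. eapply Rle_trans. apply split_err.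
     pose proof (Ppart n grad y w z tau L Gam HL0) as PP.
     assert (H1 : forall i, (i < 2*n)%nat -> Rabs (grad y i - grad w i) <= L * vnorm (2*n) (vsub y w)).
     { intros i Hi. apply (Hlip w y i Hw Hy HvH Hi). }
     specialize (PP H1 (HGam w Hw)).
     pose proof (Qpart n a y w z Aa etaa HAa ltac:(lra)) as QQ.
     assert (H2 : forall j k, (j < n)%nat -> (k < n)%nat -> Cabs (a y j k) <= Aa /\ Cabs (Csub (a y j k) (a w j k)) <= 2 * etaa).
     { intros j k Hj Hk. destruct (HAaB w y j k Hw Hy HvA Hj Hk) as [_ HH]. auto. }
     specialize (QQ H2).
     pose proof (budget nn L C1 r0 t0 Gam eps Aa etaa c (vnorm (2*n) (vsub y w)) (vnorm (2*n) (vsub w z))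
        (vnorm (2*n) (vsub y (vadd w tau))) s Gm) as BB.
     change (INR n) with nn in PP, QQ.
     assert (Hv0 := vnorm_nonneg (2*n) (vsub y w)). assert (Hz0 := vnorm_nonneg (2*n) (vsub w z)).
     assert (He0 := vnorm_nonneg (2*n) (vsub y (vadd w tau))).
     assert (HB := BB ltac:(lra) HL0 ltac:(lra) ltac:(lra) HAa ltac:(lra) Hv0 Hz0 He0 ltac:(lra) Hc Hv ltac:(lra) He ltac:(lra) HGm B1 B2 B3 Heta2).
     lra. }
   pose proof (final_B (fst (g w z)) (snd (g w z)) s (fst (g y z) - fst (g w z) - s/2) (snd (g y z) - snd (g w z)) (Hge0 w z Hw Hz) ltac:(lra)) as FB.
   rewrite <- surjective_pairing in FB. fold Gm in FB.
   assert (E1 : (fst (g y z) - fst (g w z) - s / 2, snd (g y z) - snd (g w z)) = Csub (g y z) (Cadd (g w z) (- t / 2, 0))).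
   { apply Cpx_eq; unfold Csub, Cadd, s; simpl; field. }
   assert (E2 : (fst (g w z) + s / 2 + (fst (g y z) - fst (g w z) - s / 2), snd (g w z) + (snd (g y z) - snd (g w z))) = g y z).
   { apply Cpx_eq; simpl; ring. }
   rewrite E1, E2 in FB. specialize (FB HR). lra.
 -
   destruct (Hug w z y Hw Hz Hy ltac:(lra)) as [HGy [Hd1 Hd2]].
   pose proof (F1' w z Hw Hz). assert (r0 * r0 <= vnorm (2*n) (vsub w z) * vnorm (2*n) (vsub w z)) by (apply mono2; lra).
   assert (c * (r0 * r0) <= Cabs (g w z)) by (eapply Rle_trans; [|apply H]; apply Rmult_le_compat_l; lra).
   assert (HD : Cabs (Csub (g y z) (g w z)) <= c * r0 * r0 / 2).
   { eapply Rle_trans. apply Cabs_le_sum. unfold Csub; cbn [fst snd]. lra. }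
   assert (E1 : g w z = Csub (g y z) (Csub (g y z) (g w z))) by (apply Cpx_eq; unfold Csub; simpl; ring).
   assert (E2 : g y z = Cadd (g w z) (Csub (g y z) (g w z))) by (apply Cpx_eq; unfold Csub, Cadd; simpl; ring).
   pose proof (Cabs_sub_triang (g y z) (Csub (g y z) (g w z))) as HT1. rewrite <- E1 in HT1.
   pose proof (Cabs_triang (g w z) (Csub (g y z) (g w z))) as HT2. rewrite <- E2 in HT2.
   split; lra.
Qed.
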